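(* Let $s\subseteq\mathcal{H}$ be a nonzero subspace with orthogonal projector $\mathcal{P}$, let $\rho=\mathcal{P}/\dim s$, and let $r=\dim s\,(1+R_g(\rho))$. Then for every density matrix $\sigma''$ whose support equals $s$, $$r\ \ge\ 2^{E_R(\sigma'')+S(\sigma'')}\ \ge\ 2^{G(\sigma'')}.$$
   Context: $\mathcal{H}=\mathcal{H}_1\otimes\cdots\otimes\mathcal{H}_m$ is finite-dimensional. A state is separable if it is a convex combination of product states; $\mathfrak{S}$ is the set of separable density matrices. Global robustness: $R_g(\sigma)=\min\{t\ge0:\exists$ a density matrix $\varrho$ with $(\sigma+t\varrho)/(1+t)\in\mathfrak{S}\}$. $E_R(\sigma)=\min_{\omega\in\mathfrak{S}}\mathrm{Tr}\,\sigma(\log_2\sigma-\log_2\omega)$; $S(\sigma)=-\mathrm{Tr}\,\sigma\log_2\sigma$; $G(\sigma)=-\log_2\max\langle\phi|\sigma|\phi\rangle$ over unit product vectors $|\phi\rangle=|\phi_1\rangle\otimes\cdots\otimes|\phi_m\rangle$. The support of a density matrix is the span of its eigenvectors with nonzero eigenvalues. *)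

(* Defs.v *)
From Stdlib Require Import Reals List ClassicalEpsilon.
Open Scope R_scope.

Record C := mkC { re : R ; im : R }.
Definition C0 : C := mkC 0 0.
Definition C1 : C := mkC 1 0.
Definition RtoC (x : R) : C := mkC x 0.
Definition Cadd (a b : C) : C := mkC (re a + re b) (im a + im b).
Definition Copp (a : C) : C := mkC (- re a) (- im a).
Definition Csub (a b : C) : C := Cadd a (Copp b).
Definition Cmul (a b : C) : C :=
  mkC (re a * re b - im a * im b) (re a * im b + im a * re b).
Definition Cconj (a : C) : C := mkC (re a) (- im a).
Definition Cnorm2 (a : C) : R := re a * re a + im a * im a.

Fixpoint csum (n : nat) (f : nat -> C) : C :=
  match n with O => C0 | S n' => Cadd (csum n' f) (f n') end.
Fixpoint rsum (n : nat) (f : nat -> R) : R :=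
  match n with O => 0 | S n' => rsum n' f + f n' end.

(** * Vectors and matrices of dimension n: only indices < n are relevant. *)
Definition vec := nat -> C.
Definition mat := nat -> nat -> C.

Definition vec_eq (n : nat) (u v : vec) : Prop := forall i, (i < n)%nat -> u i = v i.
Definition mat_eq (n : nat) (A B : mat) : Prop :=
  forall i j, (i < n)%nat -> (j < n)%nat -> A i j = B i j.

Definition inner (n : nat) (u v : vec) : C := csum n (fun i => Cmul (Cconj (u i)) (v i)).
Definition mat_vec (n : nat) (A : mat) (v : vec) : vec := fun i => csum n (fun j => Cmul (A i j) (v j)).
Definition mat_mul (n : nat) (A B : mat) : mat := fun i j => csum n (fun k => Cmul (A i k) (B k j)).
Definition mat_add (A B : mat) : mat := fun i j => Cadd (A i j) (B i j).
Definition mat_sub (A B : mat) : mat := fun i j => Csub (A i j) (B i j).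
Definition mat_scale (c : C) (A : mat) : mat := fun i j => Cmul c (A i j).
Definition trace (n : nat) (A : mat) : C := csum n (fun i => A i i).
Definition outer (u v : vec) : mat := fun i j => Cmul (u i) (Cconj (v j)).

Definition unit_vec (n : nat) (v : vec) : Prop := rsum n (fun i => Cnorm2 (v i)) = 1.

Definition orthonormal (n k : nat) (e : nat -> vec) : Prop :=
  forall a b, (a < k)%nat -> (b < k)%nat ->
    inner n (e a) (e b) = if Nat.eqb a b then C1 else C0.

Definition hermitian (n : nat) (A : mat) : Prop :=
  forall i j, (i < n)%nat -> (j < n)%nat -> A i j = Cconj (A j i).
Definition psd (n : nat) (A : mat) : Prop :=
  forall v : vec, 0 <= re (inner n v (mat_vec n A v)).
Definition density (n : nat) (A : mat) : Prop :=
  hermitian n A /\ psd n A /\ trace n A = C1.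

Definition in_span (n k : nat) (e : nat -> vec) (v : vec) : Prop :=
  exists c : nat -> C, vec_eq n v (fun i => csum k (fun j => Cmul (c j) (e j i))).

Definition in_support (n : nat) (A : mat) (v : vec) : Prop :=
  exists (N : nat) (u : nat -> vec) (lam : nat -> C) (c : nat -> C),
    (forall j, (j < N)%nat -> lam j <> C0 /\
        vec_eq n (mat_vec n A (u j)) (fun i => Cmul (lam j) (u j i))) /\
    vec_eq n v (fun i => csum N (fun j => Cmul (c j) (u j i))).

Definition spectral_decomp (n : nat) (A : mat) (b : nat -> vec) (q : nat -> R) : Prop :=
  orthonormal n n b /\
  mat_eq n A (fun i l => csum n (fun j => Cmul (RtoC (q j)) (outer (b j) (b j) i l))).

Definition log2 (x : R) : R := ln x / ln 2.

(** L = log2 A, with the usual convention that log acts on the support of A *)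
Definition is_log2_mat (n : nat) (A L : mat) : Prop :=
  exists b q, spectral_decomp n A b q /\
   mat_eq n L (fun i l => csum n (fun j =>
      Cmul (RtoC (if Rlt_dec 0 (q j) then log2 (q j) else 0)) (outer (b j) (b j) i l))).

Definition is_glb (E : R -> Prop) (m : R) : Prop :=
  (forall x, E x -> m <= x) /\ (forall y, (forall x, E x -> y <= x) -> y <= m).
Definition Inf (E : R -> Prop) : R := epsilon (inhabits 0) (is_glb E).
Definition Sup (E : R -> Prop) : R := epsilon (inhabits 0) (is_lub E).
Definition the_real (P : R -> Prop) : R := epsilon (inhabits 0) P.

(** * Multipartite structure: H = C^{d_1} (x) ... (x) C^{d_m}, ds = [d_1; ...; d_m] *)
Fixpoint dimprod (ds : list nat) : nat :=
  match ds with nil => 1%nat | d :: ds' => (d * dimprod ds')%nat end.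

(** product vector phi_0 (x) ... (x) phi_{m-1}; phis i is the vector of party i *)
Fixpoint prod_vec (ds : list nat) (phis : nat -> vec) : vec :=
  match ds with
  | nil => fun k => if Nat.eqb k 0 then C1 else C0
  | d :: ds' => fun k =>
      Cmul (phis O (Nat.div k (dimprod ds')))
           (prod_vec ds' (fun i => phis (S i)) (Nat.modulo k (dimprod ds')))
  end.

Fixpoint prod_mat (ds : list nat) (rhos : nat -> mat) : mat :=
  match ds with
  | nil => fun k l => if andb (Nat.eqb k 0) (Nat.eqb l 0) then C1 else C0
  | d :: ds' => fun k l =>
      Cmul (rhos O (Nat.div k (dimprod ds')) (Nat.div l (dimprod ds')))
           (prod_mat ds' (fun i => rhos (S i))
              (Nat.modulo k (dimprod ds')) (Nat.modulo l (dimprod ds')))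
  end.

Definition separable (ds : list nat) (w : mat) : Prop :=
  density (dimprod ds) w /\
  exists (N : nat) (p : nat -> R) (rhos : nat -> nat -> mat),
    (forall j, (j < N)%nat -> 0 <= p j) /\ rsum N p = 1 /\
    (forall j i, (j < N)%nat -> (i < length ds)%nat -> density (nth i ds O) (rhos j i)) /\
    mat_eq (dimprod ds) w
      (fun a b => csum N (fun j => Cmul (RtoC (p j)) (prod_mat ds (rhos j) a b))).

Definition Rg (ds : list nat) (sigma : mat) : R :=
  Inf (fun t => 0 <= t /\ exists rho, density (dimprod ds) rho /\
        separable ds (mat_scale (RtoC (/ (1 + t))) (mat_add sigma (mat_scale (RtoC t) rho)))).

Definition vN_entropy (n : nat) (sigma : mat) : R :=
  the_real (fun x => exists L, is_log2_mat n sigma L /\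
                     x = - re (trace n (mat_mul n sigma L))).

(** relative entropy of entanglement: min over separable omega of
    Tr sigma (log2 sigma - log2 omega); only omega with supp sigma <= supp omega
    give a finite value, so the minimum is over those. *)
Definition E_R (ds : list nat) (sigma : mat) : R :=
  Inf (fun x => exists w, separable ds w /\
        (forall v, in_support (dimprod ds) sigma v -> in_support (dimprod ds) w v) /\
        exists Ls Lw, is_log2_mat (dimprod ds) sigma Ls /\ is_log2_mat (dimprod ds) w Lw /\
          x = re (trace (dimprod ds) (mat_mul (dimprod ds) sigma (mat_sub Ls Lw)))).

Definition G_measure (ds : list nat) (sigma : mat) : R :=
  - log2 (Sup (fun x => exists phis : nat -> vec,
        (forall i, (i < length ds)%nat -> unit_vec (nth i ds O) (phis i)) /\
        x = re (inner (dimprod ds) (prod_vec ds phis)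
                  (mat_vec (dimprod ds) sigma (prod_vec ds phis))))).

Definition projector (k : nat) (e : nat -> vec) : mat :=
  fun a b => csum k (fun j => outer (e j) (e j) a b).

(* Main.v *)
Require Import Defs.
From Stdlib Require Import Reals List.
From Stdlib Require Import Lra Lia Arith ClassicalEpsilon.
From mathcomp Require ssreflect ssrfun ssrbool eqtype ssrnat seq fintype bigop ssralg ssrnum matrix mxalgebra sesquilinear spectral complex Rstruct.
Import Defs.
Open Scope R_scope.

Module MCT.
Import ssreflect ssrfun ssrbool eqtype ssrnat seq fintype bigop ssralg ssrnum matrix mxalgebra sesquilinear spectral complex Rstruct.
Import GRing.Theory Num.Theory.
Local Open Scope ring_scope.
Local Open Scope complex_scope.

Definition toc (z : C) : R[i] := Complex (re z) (im z).
Definition ofc (z : R[i]) : C := mkC (complex.Re z) (complex.Im z).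
Lemma tocK z : ofc (toc z) = z. Proof. by case: z. Qed.
Lemma ofcK z : toc (ofc z) = z. Proof. by case: z. Qed.
Lemma toc_add a b : toc (Cadd a b) = toc a + toc b. Proof. by []. Qed.
Lemma toc_mul a b : toc (Cmul a b) = toc a * toc b. Proof. by []. Qed.
Lemma toc_conj a : toc (Cconj a) = Num.conj (toc a). Proof. by []. Qed.
Lemma toc_C0 : toc C0 = 0. Proof. by []. Qed.
Lemma toc_C1 : toc C1 = 1. Proof. by []. Qed.
Lemma toc_R x : toc (RtoC x) = x%:C. Proof. by []. Qed.

Lemma toc_inj a b : toc a = toc b -> a = b.
Proof. by move=> H; rewrite -(tocK a) H tocK. Qed.

Lemma toc_csum n f : toc (csum n f) = \sum_(j < n) toc (f j).
Proof.
elim: n => [|n IH] /=; first by rewrite big_ord0.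
by rewrite toc_add IH big_ord_recr.
Qed.

Lemma eqb_ord n (a c : nat) : (a < n.+1)%N -> (c < n.+1)%N ->
  ((inord a : 'I_n.+1) == inord c) = Nat.eqb a c.
Proof.
move=> Ha Hc; by rewrite -(inj_eq val_inj) /= !inordK.
Qed.

Lemma toc_if (bb : bool) : toc (if bb then C1 else C0) = (bb%:R).
Proof. by case: bb. Qed.

Lemma spectral_exists n (A : mat) : Defs.hermitian n A -> exists b q, Defs.spectral_decomp n A b q.
Proof.
case: n => [|n] HA.
  exists (fun _ _ => C0), (fun _ => 0%R); split => [a c Ha|i j Hi]; exfalso; [exact: (PeanoNat.Nat.nlt_0_r _ Ha)|exact: (PeanoNat.Nat.nlt_0_r _ Hi)].
pose MA : 'M[R[i]]_n.+1 := \matrix_(i, j) toc (A i j).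
have Hh : MA \is hermsymmx.
  rewrite is_hermitianmxE expr0 scale1r; apply/eqP/matrixP => i j; rewrite !mxE.
  by rewrite {1}HA //; apply/ltP.
have /hermitian_normalmx/orthomx_spectralP E := Hh.
set P := spectralmx MA in E; set D := spectral_diag MA in E.
have PU : P \is unitarymx := spectral_unitarymx MA.
have Dreal := hermitian_spectral_diag_real Hh.
rewrite invmx_unitary // in E.
pose b := fun (j i : nat) => ofc (Num.conj (P (inord j) (inord i))).
pose q := fun j : nat => complex.Re (D ord0 (inord j)).
exists b, q; split.
- move=> a c Ha Hc; apply: toc_inj; rewrite toc_csum toc_if.
  have Ha' : (a < n.+1)%N by apply/ltP.
  have Hc' : (c < n.+1)%N by apply/ltP.
  have := unitarymxP PU; move/matrixP => /(_ (inord a) (inord c)).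
  rewrite !mxE (@eqb_ord n) // => <-.
  apply: eq_bigr => i _; rewrite toc_mul toc_conj /b !ofcK conjCK !mxE inord_val.
  by [].
- move=> i l Hi Hl; apply: toc_inj; rewrite toc_csum.
  have Hi' : (i < n.+1)%N by apply/ltP.
  have Hl' : (l < n.+1)%N by apply/ltP.
  have -> : toc (A i l) = MA (inord i) (inord l) by rewrite mxE !inordK.
  rewrite E mul_mx_diag !mxE; apply: eq_bigr => j _.
  rewrite !mxE /outer !toc_mul toc_conj toc_R /b /q !ofcK conjCK inord_val.
  have : D ord0 j \is Num.real by apply: (mxOverP Dreal).
  case: (D ord0 j) => x y; rewrite complex_real => /eqP -> /=.
  rewrite -[Complex x 0]/(x%:C).
  by rewrite mulrA [_ * x%:C]mulrC.
Qed.

Lemma orth_complete n (b : nat -> vec) : Defs.orthonormal n n b ->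
  forall i l, (i < n)%coq_nat -> (l < n)%coq_nat ->
  csum n (fun j => Cmul (b j i) (Cconj (b j l))) = if Nat.eqb i l then C1 else C0.
Proof.
case: n => [|n] Hb i l Hi Hl; first by exfalso; apply: (PeanoNat.Nat.nlt_0_r i).
pose P : 'M[R[i]]_n.+1 := \matrix_(j, i) Num.conj (toc (b j i)).
have PU : P \is unitarymx.
  apply/unitarymxP/matrixP => a c; rewrite !mxE.
  have := Hb a c (ltP (ltn_ord a)) (ltP (ltn_ord c)).
  move=> /(congr1 toc); rewrite toc_csum toc_if.
  have -> : Nat.eqb a c = (a == c) by rewrite -(inj_eq val_inj).
  move=> <-; apply: eq_bigr => k _; rewrite !mxE toc_mul toc_conj conjCK //.
have Hi' : (i < n.+1)%N by apply/ltP.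
have Hl' : (l < n.+1)%N by apply/ltP.
rewrite -trmxC_unitary in PU.
have := unitarymxP PU; rewrite trmxCK => /matrixP /(_ (inord i) (inord l)).
rewrite !mxE eqb_ord // => H; apply: toc_inj; rewrite toc_csum toc_if -H.
apply: eq_bigr => j _; rewrite !mxE conjCK toc_mul toc_conj !inordK // mulrC.
Qed.
End MCT.



Lemma C_ext a b : re a = re b -> im a = im b -> a = b.
Proof. destruct a, b; simpl; intros; subst; reflexivity. Qed.
Ltac Csolve := apply C_ext; simpl; ring.

Lemma rsum_ext n f g : (forall i, (i < n)%nat -> f i = g i) -> rsum n f = rsum n g.
Proof. induction n; simpl; intros; auto. rewrite IHn, H; auto. Qed.
Lemma rsum_plus n f g : rsum n (fun i => f i + g i) = rsum n f + rsum n g.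
Proof. induction n; simpl; [ring|rewrite IHn; ring]. Qed.
Lemma rsum_minus n f g : rsum n (fun i => f i - g i) = rsum n f - rsum n g.
Proof. induction n; simpl; [ring|rewrite IHn; ring]. Qed.
Lemma rsum_scal n c f : rsum n (fun i => c * f i) = c * rsum n f.
Proof. induction n; simpl; [ring|rewrite IHn; ring]. Qed.
Lemma rsum_0 n : rsum n (fun _ => 0) = 0.
Proof. induction n; simpl; [ring|rewrite IHn; ring]. Qed.
Lemma rsum_le n f g : (forall i, (i < n)%nat -> f i <= g i) -> rsum n f <= rsum n g.
Proof. induction n; simpl; intros; [lra|]. pose proof (H n ltac:(lia)). assert (rsum n f <= rsum n g) by auto. lra. Qed.
Lemma rsum_nonneg n f : (forall i, (i < n)%nat -> 0 <= f i) -> 0 <= rsum n f.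
Proof. intros. rewrite <- (rsum_0 n). apply rsum_le; auto. Qed.
Lemma rsum_swap n m (f : nat -> nat -> R) :
  rsum n (fun i => rsum m (fun j => f i j)) = rsum m (fun j => rsum n (fun i => f i j)).
Proof. induction n; simpl. rewrite rsum_0; auto. rewrite IHn, <- rsum_plus. auto. Qed.
Lemma rsum_single n a (f : nat -> R) : (a < n)%nat ->
  rsum n (fun i => if Nat.eqb i a then f i else 0) = f a.
Proof.
  induction n; intros; [lia|simpl].
  destruct (Nat.eqb_spec n a).
  - subst. rewrite (rsum_ext _ _ (fun _ => 0)). rewrite rsum_0; ring.
    intros. destruct (Nat.eqb_spec i a); [lia|auto].
  - rewrite IHn by lia. ring.
Qed.
Lemma rsum_term_le n f a : (forall i, (i < n)%nat -> 0 <= f i) -> (a < n)%nat -> f a <= rsum n f.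
Proof.
  intros. rewrite <- (rsum_single n a f) by auto. apply rsum_le. intros.
  destruct (Nat.eqb_spec i a); [lra|auto].
Qed.
Lemma rsum_app a b f : rsum (a + b) f = rsum a f + rsum b (fun i => f (a + i)%nat).
Proof. induction b; simpl. rewrite Nat.add_0_r; ring. rewrite Nat.add_succ_r; simpl. rewrite IHb; ring. Qed.
Lemma rsum_mul d N f : rsum (d * N) f = rsum d (fun a => rsum N (fun x => f (a * N + x)%nat)).
Proof.
  induction d; simpl; auto.
  replace (N + d * N)%nat with (d * N + N)%nat by lia. rewrite rsum_app, IHd. auto.
Qed.
Lemma rsum_zero_each n f : (forall i, (i < n)%nat -> 0 <= f i) -> rsum n f <= 0 ->
  forall i, (i < n)%nat -> f i = 0.
Proof. intros. pose proof (rsum_term_le n f i H H1). pose proof (H i H1). lra. Qed.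

Lemma re_csum n f : re (csum n f) = rsum n (fun i => re (f i)).
Proof. induction n; simpl; auto. rewrite IHn; auto. Qed.
Lemma im_csum n f : im (csum n f) = rsum n (fun i => im (f i)).
Proof. induction n; simpl; auto. rewrite IHn; auto. Qed.
Lemma csum_ext n f g : (forall i, (i < n)%nat -> f i = g i) -> csum n f = csum n g.
Proof. induction n; simpl; intros; auto. rewrite IHn, H; auto. Qed.
Lemma csum_plus n f g : csum n (fun i => Cadd (f i) (g i)) = Cadd (csum n f) (csum n g).
Proof. apply C_ext; simpl; rewrite ?re_csum, ?im_csum; simpl; apply rsum_plus. Qed.
Lemma csum_scal n c f : csum n (fun i => Cmul c (f i)) = Cmul c (csum n f).
Proof.
  apply C_ext; simpl; rewrite ?re_csum, ?im_csum; simpl;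
  rewrite <- !rsum_scal, <- ?rsum_minus, <- ?rsum_plus; apply rsum_ext; intros; ring.
Qed.
Lemma csum_scal_r n c f : csum n (fun i => Cmul (f i) c) = Cmul (csum n f) c.
Proof.
  apply C_ext; simpl; rewrite ?re_csum, ?im_csum; simpl;
  rewrite <- ?rsum_scal, <- ?rsum_minus, <- ?rsum_plus;
  rewrite ?(Rmult_comm _ (re c)), ?(Rmult_comm _ (im c)), <- ?rsum_scal, <- ?rsum_minus, <- ?rsum_plus;
  apply rsum_ext; intros; ring.
Qed.
Lemma csum_0 n : csum n (fun _ => C0) = C0.
Proof. induction n; simpl; auto. rewrite IHn. Csolve. Qed.
Lemma csum_swap n m (f : nat -> nat -> C) :
  csum n (fun i => csum m (fun j => f i j)) = csum m (fun j => csum n (fun i => f i j)).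
Proof.
  apply C_ext; rewrite ?re_csum, ?im_csum;
  rewrite (rsum_ext _ _ (fun i => rsum m (fun j => _ (f i j)))) by (intros; rewrite ?re_csum, ?im_csum; auto);
  rewrite rsum_swap; apply rsum_ext; intros; rewrite ?re_csum, ?im_csum; auto.
Qed.
Lemma csum_single n a (f : nat -> C) : (a < n)%nat ->
  csum n (fun i => if Nat.eqb i a then f i else C0) = f a.
Proof.
  intros. apply C_ext; rewrite ?re_csum, ?im_csum.
  - rewrite (rsum_ext _ _ (fun i => if Nat.eqb i a then re (f i) else 0)).
    apply rsum_single; auto. intros; destruct (Nat.eqb i a); auto.
  - rewrite (rsum_ext _ _ (fun i => if Nat.eqb i a then im (f i) else 0)).
    apply rsum_single; auto. intros; destruct (Nat.eqb i a); auto.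
Qed.
Lemma csum_mul d N f : csum (d * N) f = csum d (fun a => csum N (fun x => f (a * N + x)%nat)).
Proof.
  apply C_ext; rewrite ?re_csum, ?im_csum, rsum_mul; apply rsum_ext; intros; rewrite ?re_csum, ?im_csum; auto.
Qed.
Lemma Cconj_csum n f : Cconj (csum n f) = csum n (fun i => Cconj (f i)).
Proof.
  apply C_ext; simpl; rewrite ?re_csum, ?im_csum; simpl; auto.
  rewrite (rsum_ext n (fun i => - im (f i)) (fun i => -1 * im (f i))) by (intros; ring). rewrite rsum_scal. ring.
Qed.



Definition nrm2 n (v : vec) := rsum n (fun i => Cnorm2 (v i)).

Lemma inner_ext n u u' v v' : vec_eq n u u' -> vec_eq n v v' -> inner n u v = inner n u' v'.
Proof. intros. unfold inner. apply csum_ext. intros. rewrite H, H0; auto. Qed.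

Lemma inner_conj n u v : inner n v u = Cconj (inner n u v).
Proof. unfold inner. rewrite Cconj_csum. apply csum_ext; intros; Csolve. Qed.

Lemma inner_lin_r n m u (c : nat -> C) (w : nat -> vec) :
  inner n u (fun i => csum m (fun j => Cmul (c j) (w j i))) = csum m (fun j => Cmul (c j) (inner n u (w j))).
Proof.
  unfold inner.
  rewrite (csum_ext n _ (fun i => csum m (fun j => Cmul (c j) (Cmul (Cconj (u i)) (w j i))))).
  - rewrite csum_swap. apply csum_ext; intros; rewrite csum_scal; auto.
  - intros. rewrite <- csum_scal. apply csum_ext; intros; Csolve.
Qed.

Lemma inner_lin_l n m v (c : nat -> C) (w : nat -> vec) :
  inner n (fun i => csum m (fun j => Cmul (c j) (w j i))) v = csum m (fun j => Cmul (Cconj (c j)) (inner n (w j) v)).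
Proof.
  unfold inner.
  rewrite (csum_ext n _ (fun i => csum m (fun j => Cmul (Cconj (c j)) (Cmul (Cconj (w j i)) (v i))))).
  - rewrite csum_swap. apply csum_ext; intros; rewrite csum_scal; auto.
  - intros. rewrite Cconj_csum, <- csum_scal_r. apply csum_ext; intros; Csolve.
Qed.

Lemma re_inner_self n v : re (inner n v v) = nrm2 n v.
Proof. unfold inner, nrm2. rewrite re_csum. apply rsum_ext. intros. unfold Cnorm2. simpl. ring. Qed.

Lemma nrm2_nonneg n v : 0 <= nrm2 n v.
Proof. apply rsum_nonneg. intros. unfold Cnorm2. nra. Qed.

Lemma Cnorm2_nonneg z : 0 <= Cnorm2 z.
Proof. unfold Cnorm2. nra. Qed.

Lemma K1 n m (M : mat) (a : nat -> C) (x y : nat -> vec) v :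
  mat_eq n M (fun i l => csum m (fun j => Cmul (a j) (outer (x j) (y j) i l))) ->
  vec_eq n (mat_vec n M v) (fun i => csum m (fun j => Cmul (Cmul (a j) (inner n (y j) v)) (x j i))).
Proof.
  intros H i Hi. unfold mat_vec.
  rewrite (csum_ext n _ (fun l => csum m (fun j => Cmul (Cmul (a j) (x j i)) (Cmul (Cconj (y j l)) (v l))))).
  - rewrite csum_swap. apply csum_ext; intros. rewrite csum_scal. unfold inner. Csolve.
  - intros l Hl. rewrite H by auto. rewrite <- csum_scal_r. apply csum_ext; intros; unfold outer; Csolve.
Qed.

Lemma K2 n m (M : mat) (a : nat -> C) (x y : nat -> vec) u v :
  mat_eq n M (fun i l => csum m (fun j => Cmul (a j) (outer (x j) (y j) i l))) ->
  inner n u (mat_vec n M v) = csum m (fun j => Cmul (Cmul (a j) (inner n (y j) v)) (inner n u (x j))).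
Proof.
  intros H. rewrite (inner_ext n u u _ _ (fun i j => eq_refl) (K1 n m M a x y v H)).
  apply inner_lin_r.
Qed.

Lemma T1 n m (A B : mat) (a : nat -> C) (x : nat -> vec) :
  mat_eq n B (fun i l => csum m (fun j => Cmul (a j) (outer (x j) (x j) i l))) ->
  trace n (mat_mul n A B) = csum m (fun j => Cmul (a j) (inner n (x j) (mat_vec n A (x j)))).
Proof.
  intros H. unfold trace, mat_mul.
  rewrite (csum_ext n _ (fun i => csum m (fun j => csum n (fun k => Cmul (a j) (Cmul (Cconj (x j i)) (Cmul (A i k) (x j k))))))).
  - rewrite csum_swap. apply csum_ext; intros j Hj.
    unfold inner, mat_vec. rewrite <- csum_scal. apply csum_ext; intros i Hi.
    rewrite csum_scal. f_equal. rewrite csum_scal. auto.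
  - intros i Hi.
    rewrite (csum_ext n _ (fun k => csum m (fun j => Cmul (a j) (Cmul (Cconj (x j i)) (Cmul (A i k) (x j k)))))).
    + apply csum_swap.
    + intros k Hk. rewrite H by auto. rewrite <- csum_scal. apply csum_ext; intros; unfold outer; Csolve.
Qed.

Lemma mat_vec_ext n A B v v' : mat_eq n A B -> vec_eq n v v' -> vec_eq n (mat_vec n A v) (mat_vec n B v').
Proof. intros H H0 i Hi. unfold mat_vec. apply csum_ext. intros. rewrite H, H0; auto. Qed.

Lemma trace_ext n A B A' B' : mat_eq n A A' -> mat_eq n B B' -> trace n (mat_mul n A B) = trace n (mat_mul n A' B').
Proof. intros. unfold trace, mat_mul. apply csum_ext; intros. apply csum_ext; intros. rewrite H, H0; auto. Qed.



Definition orth_complete := MCT.orth_complete.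
Definition spectral_exists := MCT.spectral_exists.

Lemma recon n b v : orthonormal n n b ->
  vec_eq n v (fun i => csum n (fun j => Cmul (inner n (b j) v) (b j i))).
Proof.
  intros Hb i Hi. unfold inner.
  rewrite (csum_ext n _ (fun j => csum n (fun l => Cmul (v l) (Cmul (b j i) (Cconj (b j l)))))).
  - rewrite csum_swap.
    rewrite (csum_ext n _ (fun l => if Nat.eqb l i then v l else C0)).
    + rewrite csum_single; auto.
    + intros l Hl. rewrite csum_scal. rewrite orth_complete by auto.
      destruct (Nat.eqb_spec i l), (Nat.eqb_spec l i); subst; try lia; Csolve.
  - intros j Hj. rewrite <- csum_scal_r. apply csum_ext; intros; Csolve.
Qed.

Lemma parseval n b v : orthonormal n n b ->
  nrm2 n v = rsum n (fun j => Cnorm2 (inner n (b j) v)).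
Proof.
  intros Hb. rewrite <- re_inner_self.
  rewrite (inner_ext n v v v _ (fun i _ => eq_refl) (recon n b v Hb)).
  rewrite inner_lin_r, re_csum. apply rsum_ext. intros j Hj.
  rewrite (inner_conj n (b j) v). unfold Cnorm2. simpl. ring.
Qed.

Section SD.
Variables (n : nat) (A : mat) (b : nat -> vec) (q : nat -> R).
Hypothesis HSD : spectral_decomp n A b q.

Lemma SD_inner u v : inner n u (mat_vec n A v) =
  csum n (fun j => Cmul (Cmul (RtoC (q j)) (inner n (b j) v)) (inner n u (b j))).
Proof. destruct HSD. apply (K2 n n A (fun j => RtoC (q j)) b b u v H0). Qed.

Lemma SD_vec v : vec_eq n (mat_vec n A v) (fun i => csum n (fun j => Cmul (Cmul (RtoC (q j)) (inner n (b j) v)) (b j i))).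
Proof. destruct HSD. apply (K1 n n A (fun j => RtoC (q j)) b b v H0). Qed.

Lemma SD_orth a c : (a < n)%nat -> (c < n)%nat -> inner n (b a) (b c) = if Nat.eqb a c then C1 else C0.
Proof. destruct HSD. apply H. Qed.

Lemma SD_eig j : (j < n)%nat -> vec_eq n (mat_vec n A (b j)) (fun i => Cmul (RtoC (q j)) (b j i)).
Proof.
  intros Hj i Hi. rewrite SD_vec by auto.
  rewrite (csum_ext n _ (fun m => if Nat.eqb m j then Cmul (RtoC (q m)) (b m i) else C0)).
  - rewrite csum_single; auto.
  - intros m Hm. rewrite SD_orth by auto. destruct (Nat.eqb m j); Csolve.
Qed.

Lemma SD_quad v : re (inner n v (mat_vec n A v)) = rsum n (fun j => q j * Cnorm2 (inner n (b j) v)).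
Proof.
  rewrite SD_inner, re_csum. apply rsum_ext. intros j Hj.
  rewrite (inner_conj n (b j) v). unfold Cnorm2. simpl. ring.
Qed.

Lemma SD_qj j : (j < n)%nat -> re (inner n (b j) (mat_vec n A (b j))) = q j.
Proof.
  intros Hj. rewrite SD_quad.
  rewrite (rsum_ext n _ (fun m => if Nat.eqb m j then q m else 0)).
  - apply rsum_single; auto.
  - intros m Hm. rewrite SD_orth by auto. destruct (Nat.eqb m j); unfold Cnorm2; simpl; ring.
Qed.

Lemma SD_nonneg j : psd n A -> (j < n)%nat -> 0 <= q j.
Proof. intros Hp Hj. rewrite <- SD_qj by auto. apply Hp. Qed.

Lemma SD_trace : re (trace n A) = rsum n q.
Proof.
  destruct HSD as [Ho Hm]. unfold trace. rewrite re_csum.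
  rewrite (rsum_ext n _ (fun i => rsum n (fun j => q j * Cnorm2 (b j i)))).
  - rewrite rsum_swap. apply rsum_ext. intros j Hj.
    rewrite rsum_scal. pose proof (Ho j j Hj Hj) as E. rewrite Nat.eqb_refl in E.
    apply (f_equal re) in E. rewrite re_inner_self in E. unfold nrm2 in E. simpl in E. rewrite E. ring.
  - intros i Hi. rewrite Hm by auto. rewrite re_csum. apply rsum_ext; intros. unfold outer, Cnorm2. simpl. ring.
Qed.

Lemma SD_sum1 : density n A -> rsum n q = 1.
Proof. intros [_ [_ Ht]]. rewrite <- SD_trace, Ht. reflexivity. Qed.

Lemma SD_le1 j : density n A -> (j < n)%nat -> q j <= 1.
Proof.
  intros Hd Hj. rewrite <- (SD_sum1 Hd). apply (rsum_term_le n q j); auto.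
  intros; apply SD_nonneg; auto. destruct Hd as [_ [Hp _]]; auto.
Qed.

Lemma SD_unit j : (j < n)%nat -> nrm2 n (b j) = 1.
Proof. intros Hj. rewrite <- re_inner_self, SD_orth, Nat.eqb_refl by auto. reflexivity. Qed.

End SD.



Definition lg (x : R) : R := if Rlt_dec 0 x then log2 x else 0.
Definition hh (x : R) : R := if Rlt_dec 0 x then x * log2 x else 0.

Lemma ln2_pos : 0 < ln 2.
Proof. pose proof ln_lt_2. lra. Qed.

Lemma ln_le_xm1 y : 0 < y -> ln y <= y - 1.
Proof. intros. pose proof (exp_ineq1_le (ln y)). rewrite exp_ln in H0 by auto. lra. Qed.

Lemma ln_le x y : 0 < x -> x <= y -> ln x <= ln y.
Proof. intros. destruct (Req_dec x y). subst; lra. left; apply ln_increasing; lra. Qed.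

Lemma Cmul_eq0 a z : a <> C0 -> Cmul a z = C0 -> z = C0.
Proof.
  intros Ha Hz. destruct a as [ar ai], z as [zr zi]. unfold Cmul in Hz; simpl in Hz.
  injection Hz; intros H1 H2.
  assert (ar * ar + ai * ai <> 0).
  { intro. apply Ha. assert (Q1 : ar * ar = 0) by nra. assert (Q2 : ai * ai = 0) by nra.
    apply Rmult_integral in Q1. apply Rmult_integral in Q2.
    assert (ar = 0) by tauto. assert (ai = 0) by tauto. subst; reflexivity. }
  assert (E1 : (ar*ar+ai*ai)*zr = ar*(ar*zr - ai*zi) + ai*(ar*zi + ai*zr)) by ring.
  assert (E2 : (ar*ar+ai*ai)*zi = ar*(ar*zi + ai*zr) - ai*(ar*zr - ai*zi)) by ring.
  rewrite H1, H2 in E1, E2.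
  apply C_ext; simpl. apply (Rmult_eq_reg_l (ar*ar+ai*ai)); lra. apply (Rmult_eq_reg_l (ar*ar+ai*ai)); lra.
Qed.

Lemma RtoC_neq0 x : x <> 0 -> RtoC x <> C0.
Proof. intros H E. apply H. apply (f_equal re) in E. exact E. Qed.

Lemma inner_scal_r n u c v : inner n u (fun i => Cmul c (v i)) = Cmul c (inner n u v).
Proof. unfold inner. rewrite <- csum_scal. apply csum_ext; intros; Csolve. Qed.

Lemma SD_proj n A b q j v : spectral_decomp n A b q -> (j < n)%nat ->
  inner n (b j) (mat_vec n A v) = Cmul (RtoC (q j)) (inner n (b j) v).
Proof.
  intros HSD Hj. rewrite (SD_inner n A b q HSD).
  rewrite (csum_ext n _ (fun m => if Nat.eqb m j then Cmul (RtoC (q m)) (inner n (b m) v) else C0)).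
  - apply csum_single; auto.
  - intros m Hm. rewrite (inner_conj n (b m) (b j)). rewrite (SD_orth n A b q HSD) by auto.
    destruct (Nat.eqb_spec m j), (Nat.eqb_spec j m); subst; try lia; Csolve.
Qed.

Lemma supp_orth n W c p j v : spectral_decomp n W c p -> (j < n)%nat -> p j = 0 ->
  in_support n W v -> inner n (c j) v = C0.
Proof.
  intros HSD Hj Hp [N [u [lam [co [Hu Hv]]]]].
  rewrite (inner_ext n (c j) (c j) v _ (fun i _ => eq_refl) Hv). rewrite inner_lin_r.
  rewrite (csum_ext N _ (fun _ => C0)). apply csum_0.
  intros m Hm. destruct (Hu m Hm) as [Hl He].
  assert (inner n (c j) (u m) = C0).
  { apply (Cmul_eq0 (lam m)); auto.
    rewrite <- inner_scal_r. rewrite <- (inner_ext n (c j) (c j) _ _ (fun i _ => eq_refl) He).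
    rewrite (SD_proj n W c p j) by auto. rewrite Hp. Csolve. }
  rewrite H. Csolve.
Qed.

Lemma in_supp_eig n A b q l : spectral_decomp n A b q -> (l < n)%nat -> q l <> 0 ->
  in_support n A (b l).
Proof.
  intros HSD Hl Hq. exists 1%nat, (fun _ => b l), (fun _ => RtoC (q l)), (fun _ => C1). split.
  - intros j Hj. split. apply RtoC_neq0; auto. apply (SD_eig n A b q HSD l Hl).
  - intros i Hi. simpl. Csolve.
Qed.

Lemma trace_sub n A B C' : re (trace n (mat_mul n A (mat_sub B C'))) =
  re (trace n (mat_mul n A B)) - re (trace n (mat_mul n A C')).
Proof.
  unfold trace, mat_mul, mat_sub. rewrite !re_csum, <- rsum_minus. apply rsum_ext; intros.
  rewrite !re_csum, <- rsum_minus. apply rsum_ext; intros. simpl. ring.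
Qed.

Lemma trace_fun n S W c p (f : R -> R) L : spectral_decomp n W c p ->
  mat_eq n L (fun i l => csum n (fun j => Cmul (RtoC (f (p j))) (outer (c j) (c j) i l))) ->
  re (trace n (mat_mul n S L)) = rsum n (fun j => f (p j) * re (inner n (c j) (mat_vec n S (c j)))).
Proof.
  intros HSD HL. rewrite (T1 n n S L (fun j => RtoC (f (p j))) c HL). rewrite re_csum.
  apply rsum_ext. intros. simpl. ring.
Qed.

Definition aj n b q (c : nat -> vec) j := rsum n (fun l => q l * Cnorm2 (inner n (b l) (c j))).

Lemma aj_eq n S b q c j : spectral_decomp n S b q -> re (inner n (c j) (mat_vec n S (c j))) = aj n b q c j.
Proof. intros. unfold aj. apply (SD_quad n S b q H). Qed.

Lemma Cnorm2_conj z : Cnorm2 (Cconj z) = Cnorm2 z.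
Proof. unfold Cnorm2; simpl; ring. Qed.

Lemma aj_sum n S b q c p W : density n S -> spectral_decomp n S b q -> spectral_decomp n W c p ->
  rsum n (fun j => aj n b q c j) = 1.
Proof.
  intros Hd HS HW. unfold aj. rewrite rsum_swap.
  rewrite <- (SD_sum1 n S b q HS Hd). apply rsum_ext. intros l Hl.
  rewrite rsum_scal. rewrite (rsum_ext n _ (fun j => Cnorm2 (inner n (c j) (b l)))).
  - rewrite <- (parseval n c (b l)) by (destruct HW; auto). rewrite (SD_unit n S b q HS l Hl). ring.
  - intros. rewrite inner_conj, Cnorm2_conj. auto.
Qed.

Lemma aj_nonneg n b q c j : (forall l, (l < n)%nat -> 0 <= q l) -> 0 <= aj n b q c j.
Proof. intros. unfold aj. apply rsum_nonneg. intros. pose proof (Cnorm2_nonneg (inner n (b i) (c j))). pose proof (H i H0). nra. Qed.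

Lemma aj_zero n S b q W c p j : density n S -> spectral_decomp n S b q -> spectral_decomp n W c p ->
  (forall v, in_support n S v -> in_support n W v) -> (j < n)%nat -> p j = 0 -> aj n b q c j = 0.
Proof.
  intros Hd HS HW Hsup Hj Hp. unfold aj. rewrite <- (rsum_0 n). apply rsum_ext. intros l Hl.
  destruct (Req_dec (q l) 0). rewrite H; ring.
  assert (inner n (c j) (b l) = C0).
  { apply (supp_orth n W c p); auto. apply Hsup. apply (in_supp_eig n S b q); auto. }
  rewrite inner_conj, H0. unfold Cnorm2; simpl; ring.
Qed.

Lemma lg_mul x : lg x * x = hh x.
Proof. unfold lg, hh. destruct (Rlt_dec 0 x); ring. Qed.

Lemma trace_self_log n S b q L : density n S -> spectral_decomp n S b q -> is_log2_mat n S L ->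
  re (trace n (mat_mul n S L)) = rsum n (fun l => hh (q l)).
Proof.
  intros Hd HS [c [p [HW HL]]].
  rewrite (trace_fun n S S c p lg L HW HL).
  rewrite (rsum_ext n _ (fun j => rsum n (fun l => lg (p j) * (q l * Cnorm2 (inner n (b l) (c j)))))).
  2:{ intros j Hj. rewrite (aj_eq n S b q c j HS). unfold aj. rewrite <- rsum_scal. auto. }
  rewrite rsum_swap. apply rsum_ext. intros l Hl.
  rewrite (rsum_ext n _ (fun j => hh (q l) * Cnorm2 (inner n (c j) (b l)))).
  - rewrite rsum_scal, <- (parseval n c (b l)) by (destruct HW; auto). rewrite (SD_unit n S b q HS l Hl). ring.
  - intros j Hj. rewrite (inner_conj n (b l) (c j)), Cnorm2_conj.
    assert (E : Cmul (RtoC (q l)) (inner n (b l) (c j)) = Cmul (RtoC (p j)) (inner n (b l) (c j))).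
    { rewrite <- (SD_proj n S b q l (c j) HS Hl).
      rewrite <- inner_scal_r. apply inner_ext. intros i _; auto.
      apply (SD_eig n S c p HW j Hj). }
    destruct (Req_dec (Cnorm2 (inner n (b l) (c j))) 0) as [Z|NZ].
    + rewrite Z. ring.
    + assert (q l = p j).
      { destruct (inner n (b l) (c j)) as [zr zi]. unfold Cmul, RtoC in E; simpl in E. injection E; intros E1 E2.
        unfold Cnorm2 in NZ; simpl in NZ.
        assert (X1 : q l * zr = p j * zr) by lra. assert (X2 : q l * zi = p j * zi) by lra.
        assert (H : (q l - p j) * (zr * zr + zi * zi) = 0).
        { replace ((q l - p j) * (zr*zr+zi*zi)) with (zr * (q l * zr - p j * zr) + zi * (q l * zi - p j * zi)) by ring.
          rewrite X1, X2. ring. }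
        destruct (Rmult_integral _ _ H); [lra| contradiction]. }
      rewrite <- H, <- lg_mul. ring.
Qed.

Lemma log_mat_exists n S b q : spectral_decomp n S b q ->
  is_log2_mat n S (fun i l => csum n (fun j => Cmul (RtoC (lg (q j))) (outer (b j) (b j) i l))).
Proof. intros. exists b, q. split; auto. intros i l _ _. reflexivity. Qed.

Lemma vN_value n S b q : density n S -> spectral_decomp n S b q ->
  vN_entropy n S = - rsum n (fun l => hh (q l)).
Proof.
  intros Hd HS. unfold vN_entropy, the_real.
  match goal with |- epsilon ?i ?P = _ => 
    assert (Ex : exists x, P x); [|destruct (epsilon_spec i P Ex) as [L [HL ->]]] end.
  - eexists; exists (fun i l => csum n (fun j => Cmul (RtoC (lg (q j))) (outer (b j) (b j) i l))).
    split. apply log_mat_exists; auto. reflexivity.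
  - rewrite (trace_self_log n S b q L Hd HS HL). auto.
Qed.



Lemma jensen n a p : (forall j, (j < n)%nat -> 0 <= a j) -> rsum n a = 1 ->
  (forall j, (j < n)%nat -> 0 <= p j) -> (forall j, (j < n)%nat -> p j = 0 -> a j = 0) ->
  0 < rsum n (fun j => a j * p j) /\
  rsum n (fun j => lg (p j) * a j) <= log2 (rsum n (fun j => a j * p j)).
Proof.
  intros Ha Hs Hp Hz. set (m := rsum n (fun j => a j * p j)).
  assert (Hm : 0 < m).
  { destruct (Rlt_or_le 0 m) as [|Hle]; auto. exfalso.
    assert (E := rsum_zero_each n (fun j => a j * p j) (fun j Hj => Rmult_le_pos _ _ (Ha j Hj) (Hp j Hj)) Hle).
    assert (rsum n a = 0).
    { rewrite <- (rsum_0 n). apply rsum_ext. intros j Hj. specialize (E j Hj). simpl in E.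
      destruct (Req_dec (p j) 0). apply Hz; auto. apply Rmult_integral in E. destruct E; auto; contradiction. }
    lra. }
  split; auto. pose proof ln2_pos.
  apply Rle_trans with (rsum n (fun j => ((ln m - 1) * a j + / m * (a j * p j)) / ln 2)).
  - apply rsum_le. intros j Hj. unfold lg, log2. destruct (Rlt_dec 0 (p j)).
    + assert (ln (p j / m) <= p j / m - 1) by (apply ln_le_xm1; apply Rdiv_lt_0_compat; auto).
      unfold Rdiv in H0. rewrite ln_mult, ln_Rinv in H0 by (auto; apply Rinv_0_lt_compat; auto).
      pose proof (Ha j Hj).
      assert (ln (p j) <= ln m - 1 + / m * p j) by (rewrite (Rmult_comm (/m)); lra).
      assert (ln (p j) * a j <= (ln m - 1) * a j + / m * (a j * p j)).
      { replace ((ln m - 1) * a j + / m * (a j * p j)) with ((ln m - 1 + / m * p j) * a j) by ring.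
        apply Rmult_le_compat_r; auto. }
      unfold Rdiv. replace (ln (p j) * / ln 2 * a j) with ((ln (p j) * a j) * / ln 2) by ring.
      apply Rmult_le_compat_r; auto. left; apply Rinv_0_lt_compat; auto.
    + assert (p j = 0) by (pose proof (Hp j Hj); lra). rewrite (Hz j Hj H0). unfold Rdiv. ring_simplify. lra.
  - unfold Rdiv. rewrite (rsum_ext n _ (fun j => / ln 2 * ((ln m - 1) * a j + / m * (a j * p j)))) by (intros; ring).
    rewrite rsum_scal, rsum_plus, !rsum_scal. fold m. rewrite Hs. unfold log2.
    replace ((ln m - 1) * 1 + / m * m) with (ln m) by (field; lra). unfold Rdiv; lra.
Qed.

Lemma upper_bound n a p c0 : (forall j, (j < n)%nat -> 0 <= a j) -> rsum n a = 1 ->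
  (forall j, (j < n)%nat -> 0 <= p j) -> (forall j, (j < n)%nat -> p j = 0 -> a j = 0) ->
  0 < c0 -> rsum n (fun j => if Rlt_dec 0 (p j) then a j / p j else 0) <= / c0 ->
  - rsum n (fun j => lg (p j) * a j) <= - log2 c0.
Proof.
  intros Ha Hs Hp Hz Hc HS. pose proof ln2_pos.
  apply Rle_trans with (rsum n (fun j => ((- ln c0 - 1) * a j + c0 * (if Rlt_dec 0 (p j) then a j / p j else 0)) / ln 2)).
  - replace (- rsum n (fun j => lg (p j) * a j)) with (rsum n (fun j => -1 * (lg (p j) * a j))) by (rewrite rsum_scal; ring).
    apply rsum_le. intros j Hj. unfold lg, log2. destruct (Rlt_dec 0 (p j)).
    + assert (ln (c0 / p j) <= c0 / p j - 1) by (apply ln_le_xm1; apply Rdiv_lt_0_compat; auto).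
      unfold Rdiv in H0 |- *. rewrite ln_mult, ln_Rinv in H0 by (auto; apply Rinv_0_lt_compat; auto).
      pose proof (Ha j Hj).
      replace (-1 * (ln (p j) * / ln 2 * a j)) with ((- ln (p j)) * a j * / ln 2) by ring.
      apply Rmult_le_compat_r. left; apply Rinv_0_lt_compat; auto.
      replace ((- ln c0 - 1) * a j + c0 * (a j * / p j)) with ((- ln c0 - 1 + c0 * / p j) * a j) by ring.
      apply Rmult_le_compat_r; auto. lra.
    + assert (p j = 0) by (pose proof (Hp j Hj); lra). rewrite (Hz j Hj H0). unfold Rdiv. ring_simplify. lra.
  - unfold Rdiv. rewrite (rsum_ext n _ (fun j => / ln 2 * ((- ln c0 - 1) * a j + c0 * (if Rlt_dec 0 (p j) then a j * / p j else 0)))) by (intros; ring).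
    rewrite rsum_scal, rsum_plus, !rsum_scal. rewrite Hs. unfold log2.
    assert (c0 * rsum n (fun j => if Rlt_dec 0 (p j) then a j * / p j else 0) <= 1).
    { unfold Rdiv in HS. apply Rmult_le_compat_l with (r := c0) in HS; [|lra]. rewrite Rinv_r in HS; lra. }
    assert (0 < / ln 2) by (apply Rinv_0_lt_compat; auto). unfold Rdiv. nra.
Qed.

Lemma glb_exists E : (exists x, E x) -> (exists b, forall x, E x -> b <= x) -> is_glb E (Inf E).
Proof.
  intros [x0 Hx0] [b Hb]. unfold Inf. apply epsilon_spec.
  destruct (completeness (fun y => E (- y))) as [l [Hl1 Hl2]].
  - exists (- b). intros y Hy. specialize (Hb _ Hy). lra.
  - exists (- x0). rewrite Ropp_involutive; auto.
  - exists (- l). split.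
    + intros x Hx. assert (- x <= l) by (apply Hl1; rewrite Ropp_involutive; auto). lra.
    + intros y Hy. assert (l <= - y). { apply Hl2. intros z Hz. specialize (Hy _ Hz). lra. } lra.
Qed.

Lemma lub_exists E : (exists x, E x) -> (exists b, forall x, E x -> x <= b) -> is_lub E (Sup E).
Proof.
  intros Hne [b Hb]. unfold Sup. apply epsilon_spec.
  destruct (completeness E) as [l Hl]. exists b; intros y Hy; auto. auto. exists l; auto.
Qed.



Lemma divmod_aux (N a x : nat) : (x < N)%nat -> ((a * N + x) / N = a /\ (a * N + x) mod N = x)%nat.
Proof.
  intros. split.
  - symmetry. apply (Nat.div_unique _ N a x); lia.
  - symmetry. apply (Nat.mod_unique _ N a x); lia.
Qed.

Lemma pv_eval d ds phis (a x : nat) : (x < dimprod ds)%nat ->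
  prod_vec (d :: ds) phis (a * dimprod ds + x)%nat = Cmul (phis 0%nat a) (prod_vec ds (fun i => phis (S i)) x).
Proof. intros. cbn [prod_vec]. destruct (divmod_aux _ a x H) as [E1 E2]. rewrite E1, E2. auto. Qed.

Lemma pm_eval d ds rhos (a x a' x' : nat) : (x < dimprod ds)%nat -> (x' < dimprod ds)%nat ->
  prod_mat (d :: ds) rhos (a * dimprod ds + x)%nat (a' * dimprod ds + x')%nat =
  Cmul (rhos 0%nat a a') (prod_mat ds (fun i => rhos (S i)) x x').
Proof.
  intros. cbn [prod_mat]. destruct (divmod_aux _ a x H) as [E1 E2]. destruct (divmod_aux _ a' x' H0) as [E3 E4].
  rewrite E1, E2, E3, E4. auto.
Qed.

Lemma Cnorm2_mul a b : Cnorm2 (Cmul a b) = Cnorm2 a * Cnorm2 b.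
Proof. unfold Cnorm2; simpl; ring. Qed.

Lemma pv_norm ds : forall phis, (forall i, (i < length ds)%nat -> unit_vec (nth i ds 0%nat) (phis i)) ->
  nrm2 (dimprod ds) (prod_vec ds phis) = 1.
Proof.
  induction ds as [|d ds IH]; intros phis Hu.
  - unfold nrm2. simpl. unfold Cnorm2; simpl; ring.
  - unfold nrm2. cbn [dimprod]. rewrite rsum_mul.
    rewrite (rsum_ext d _ (fun a => Cnorm2 (phis 0%nat a) * nrm2 (dimprod ds) (prod_vec ds (fun i => phis (S i))))).
    + rewrite IH. rewrite (rsum_ext d _ (fun a => Cnorm2 (phis 0%nat a))) by (intros; ring).
      apply (Hu 0%nat). simpl; lia.
      intros i Hi. apply (Hu (S i)). simpl; lia.
    + intros a Ha. unfold nrm2. rewrite <- rsum_scal. apply rsum_ext. intros x Hx.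
      rewrite pv_eval by auto. apply Cnorm2_mul.
Qed.

Lemma dimprod_pos ds : (0 < dimprod ds)%nat -> forall i, (i < length ds)%nat -> (0 < nth i ds 0%nat)%nat.
Proof.
  induction ds; simpl; intros. lia.
  destruct i. destruct a; lia. apply IHds. destruct (dimprod ds); lia. lia.
Qed.

Definition e0 : vec := fun i => if Nat.eqb i 0 then C1 else C0.
Lemma e0_unit d : (0 < d)%nat -> unit_vec d e0.
Proof.
  intros. unfold unit_vec. rewrite (rsum_ext d _ (fun i => if Nat.eqb i 0 then 1 else 0)).
  apply (rsum_single d 0 (fun _ => 1)); auto.
  intros. unfold e0. destruct (Nat.eqb i 0); unfold Cnorm2; simpl; ring.
Qed.

Lemma rearr4 d N (G : nat -> nat -> nat -> nat -> C) :
  csum d (fun a => csum N (fun x => csum d (fun b => csum N (fun y => G a x b y)))) =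
  csum N (fun x => csum N (fun y => csum d (fun a => csum d (fun b => G a x b y)))).
Proof.
  rewrite csum_swap. apply csum_ext; intros x Hx.
  etransitivity. { apply csum_ext; intros a Ha. apply csum_swap. }
  apply csum_swap.
Qed.

Lemma rearr5 d N m (F : nat -> nat -> nat -> nat -> nat -> C) :
  csum d (fun a => csum N (fun x => csum d (fun b => csum N (fun y => csum m (fun k => F k a x b y))))) =
  csum m (fun k => csum N (fun x => csum N (fun y => csum d (fun a => csum d (fun b => F k a x b y))))).
Proof.
  etransitivity.
  { apply csum_ext; intros a Ha. apply csum_ext; intros x Hx. apply csum_ext; intros b Hb. apply csum_swap. }
  etransitivity.
  { apply csum_ext; intros a Ha. apply csum_ext; intros x Hx. apply csum_swap. }
  etransitivity.
  { apply csum_ext; intros a Ha. apply csum_swap. }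
  rewrite csum_swap. apply csum_ext; intros k Hk. apply rearr4.
Qed.

Definition Ma d N (M : mat) (v : vec) : mat := fun x y =>
  csum d (fun a => csum d (fun b => Cmul (Cmul (Cconj (v a)) (M (a * N + x)%nat (b * N + y)%nat)) (v b))).

Lemma quad_split d N M v (Phi Phi' : vec) :
  (forall a x, (a < d)%nat -> (x < N)%nat -> Phi (a * N + x)%nat = Cmul (v a) (Phi' x)) ->
  inner (d * N) Phi (mat_vec (d * N) M Phi) = inner N Phi' (mat_vec N (Ma d N M v) Phi').
Proof.
  intros HP. unfold inner, mat_vec, Ma. rewrite csum_mul.
  transitivity (csum d (fun a => csum N (fun x => csum d (fun b => csum N (fun y =>
    Cmul (Cmul (Cconj (Phi' x)) (Cmul (Cmul (Cconj (v a)) (M (a * N + x)%nat (b * N + y)%nat)) (v b))) (Phi' y)))))).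
  - apply csum_ext; intros a Ha; apply csum_ext; intros x Hx. rewrite csum_mul, HP by auto.
    rewrite <- csum_scal. apply csum_ext; intros b Hb. rewrite <- csum_scal. apply csum_ext; intros y Hy.
    rewrite HP by auto. Csolve.
  - rewrite rearr4. apply csum_ext; intros x Hx. rewrite <- csum_scal. apply csum_ext; intros y Hy.
    rewrite <- csum_scal_r. rewrite <- csum_scal. apply csum_ext; intros a Ha.
    rewrite <- csum_scal_r. rewrite <- csum_scal. apply csum_ext; intros b Hb. Csolve.
Qed.

Lemma trace_split d N (M P rho P' : mat) (b : nat -> vec) (q : nat -> R) :
  (forall a a' x y, (a < d)%nat -> (a' < d)%nat -> (x < N)%nat -> (y < N)%nat ->
     P (a' * N + y)%nat (a * N + x)%nat = Cmul (rho a' a) (P' y x)) ->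
  mat_eq d rho (fun i l => csum d (fun k => Cmul (RtoC (q k)) (outer (b k) (b k) i l))) ->
  trace (d * N) (mat_mul (d * N) M P) =
  csum d (fun k => Cmul (RtoC (q k)) (trace N (mat_mul N (Ma d N M (b k)) P'))).
Proof.
  intros HP Hr. unfold trace, mat_mul, Ma. rewrite csum_mul.
  transitivity (csum d (fun a => csum N (fun x => csum d (fun a' => csum N (fun y => csum d (fun k =>
    Cmul (RtoC (q k)) (Cmul (Cmul (Cmul (Cconj (b k a)) (M (a * N + x)%nat (a' * N + y)%nat)) (b k a')) (P' y x)))))))).
  - apply csum_ext; intros a Ha; apply csum_ext; intros x Hx. rewrite csum_mul.
    apply csum_ext; intros a' Ha'. apply csum_ext; intros y Hy.
    rewrite HP, Hr by auto. rewrite <- csum_scal_r, <- csum_scal. apply csum_ext; intros k Hk.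
    unfold outer. Csolve.
  - rewrite rearr5. apply csum_ext; intros k Hk. rewrite <- csum_scal. apply csum_ext; intros x Hx.
    rewrite <- csum_scal. apply csum_ext; intros y Hy. rewrite <- csum_scal_r, <- csum_scal.
    apply csum_ext; intros a Ha. rewrite <- csum_scal_r, <- csum_scal. apply csum_ext; intros a' Ha'. Csolve.
Qed.

Lemma prod_trace_bound ds : forall (rhos : nat -> mat) (M : mat) (Lam : R),
  (forall i, (i < length ds)%nat -> density (nth i ds 0%nat) (rhos i)) ->
  (forall phis, (forall i, (i < length ds)%nat -> unit_vec (nth i ds 0%nat) (phis i)) ->
      re (inner (dimprod ds) (prod_vec ds phis) (mat_vec (dimprod ds) M (prod_vec ds phis))) <= Lam) ->
  re (trace (dimprod ds) (mat_mul (dimprod ds) M (prod_mat ds rhos))) <= Lam.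
Proof.
  induction ds as [|d ds IH]; intros rhos M Lam Hd HL.
  - specialize (HL (fun _ _ => C0) (fun i Hi => ltac:(simpl in Hi; lia))).
    simpl in HL |- *. lra.
  - assert (Hd0 : density d (rhos 0%nat)) by (apply (Hd 0%nat); simpl; lia).
    destruct Hd0 as [Hh [Hp Ht]].
    destruct (spectral_exists d (rhos 0%nat) Hh) as [b [q HSD]].
    cbn [dimprod]. set (N := dimprod ds).
    rewrite (trace_split d N M (prod_mat (d :: ds) rhos) (rhos 0%nat) (prod_mat ds (fun i => rhos (S i))) b q).
    + rewrite re_csum.
      apply Rle_trans with (rsum d (fun k => q k * Lam)).
      * apply rsum_le. intros k Hk. simpl.
        replace (im (trace N (mat_mul N (Ma d N M (b k)) (prod_mat ds (fun i => rhos (S i)))))) with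
           (im (trace N (mat_mul N (Ma d N M (b k)) (prod_mat ds (fun i => rhos (S i)))))) by auto.
        ring_simplify.
        apply Rmult_le_compat_l. apply (SD_nonneg d (rhos 0%nat) b q HSD k Hp Hk).
        apply IH. intros i Hi. apply (Hd (S i)). simpl; lia.
        intros phis Hphis.
        set (phis2 := fun i => match i with O => b k | S i' => phis i' end).
        assert (E := quad_split d N M (b k) (prod_vec (d :: ds) phis2) (prod_vec ds phis)).
        change (dimprod ds) with N. rewrite <- E. apply HL.
        intros [|i] Hi. simpl. unfold unit_vec. fold (nrm2 d (b k)). apply (SD_unit d _ b q HSD k Hk).
        simpl. apply Hphis. simpl in Hi; lia.
        intros a x Ha Hx. apply pv_eval. auto.
      * rewrite (rsum_ext d _ (fun k => Lam * q k)) by (intros; ring). rewrite rsum_scal.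
        rewrite (SD_sum1 d (rhos 0%nat) b q HSD). lra. split; auto.
    + intros a a' x y Ha Ha' Hx Hy. apply pm_eval; auto.
    + destruct HSD; auto.
Qed.



Lemma inner_mscale n u c A v : inner n u (mat_vec n (mat_scale c A) v) = Cmul c (inner n u (mat_vec n A v)).
Proof.
  unfold inner, mat_vec, mat_scale. rewrite <- csum_scal. apply csum_ext; intros.
  rewrite <- csum_scal. rewrite <- (csum_scal n (Cconj (u i))). f_equal. 
  rewrite <- csum_scal. apply csum_ext; intros; Csolve.
Qed.

Lemma inner_madd n u A B v : inner n u (mat_vec n (mat_add A B) v) =
  Cadd (inner n u (mat_vec n A v)) (inner n u (mat_vec n B v)).
Proof.
  unfold inner, mat_vec, mat_add. rewrite <- csum_plus. apply csum_ext; intros.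
  rewrite <- !csum_scal, <- csum_plus. apply csum_ext; intros; Csolve.
Qed.

Lemma inner_add_r n u v w : inner n u (fun i => Cadd (v i) (w i)) = Cadd (inner n u v) (inner n u w).
Proof. unfold inner. rewrite <- csum_plus. apply csum_ext; intros; Csolve. Qed.
Lemma inner_add_l n u v w : inner n (fun i => Cadd (v i) (w i)) u = Cadd (inner n v u) (inner n w u).
Proof. unfold inner. rewrite <- csum_plus. apply csum_ext; intros; Csolve. Qed.
Lemma inner_scal_l n u c v : inner n (fun i => Cmul c (v i)) u = Cmul (Cconj c) (inner n v u).
Proof. unfold inner. rewrite <- csum_scal. apply csum_ext; intros; Csolve. Qed.

Lemma proj_quad n k e u : re (inner n u (mat_vec n (projector k e) u)) = rsum k (fun j => Cnorm2 (inner n (e j) u)).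
Proof.
  rewrite (K2 n k (projector k e) (fun _ => C1) e e u u).
  - rewrite re_csum. apply rsum_ext. intros j Hj. rewrite (inner_conj n (e j) u). unfold Cnorm2; simpl; ring.
  - intros i l _ _. unfold projector. apply csum_ext. intros; Csolve.
Qed.

Lemma span_inner n k e v w : orthonormal n k e -> in_span n k e v ->
  (forall j, (j < k)%nat -> inner n w (e j) = C0) -> inner n w v = C0.
Proof.
  intros He [g Hg] Hw. rewrite (inner_ext n w w v _ (fun i _ => eq_refl) Hg), inner_lin_r.
  rewrite (csum_ext k _ (fun _ => C0)). apply csum_0. intros. rewrite Hw by auto. Csolve.
Qed.

Lemma span_norm n k e v g : orthonormal n k e ->
  vec_eq n v (fun i => csum k (fun j => Cmul (g j) (e j i))) -> nrm2 n v = rsum k (fun j => Cnorm2 (g j)).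
Proof.
  intros He Hg. rewrite <- re_inner_self.
  rewrite (inner_ext n v _ v _ Hg (fun i _ => eq_refl)), inner_lin_l, re_csum.
  apply rsum_ext. intros j Hj.
  rewrite (inner_ext n (e j) (e j) v _ (fun i _ => eq_refl) Hg), inner_lin_r.
  rewrite (csum_ext k _ (fun m => if Nat.eqb m j then g m else C0)).
  - rewrite csum_single by auto. unfold Cnorm2; simpl; ring.
  - intros m Hm. rewrite He by auto. destruct (Nat.eqb_spec j m), (Nat.eqb_spec m j); subst; try lia; Csolve.
Qed.

Lemma bessel n k e v : orthonormal n k e -> rsum k (fun j => Cnorm2 (inner n (e j) v)) <= nrm2 n v.
Proof.
  intros He.
  set (Pv := fun i => csum k (fun j => Cmul (inner n (e j) v) (e j i))).
  set (w := fun i => Cadd (v i) (Cmul (RtoC (-1)) (Pv i))).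
  assert (0 <= nrm2 n w) by apply nrm2_nonneg.
  assert (HePv : forall j, (j < k)%nat -> inner n (e j) Pv = inner n (e j) v).
  { intros j Hj. unfold Pv. rewrite inner_lin_r.
    rewrite (csum_ext k _ (fun m => if Nat.eqb m j then inner n (e m) v else C0)).
    - apply csum_single; auto.
    - intros m Hm. rewrite He by auto. destruct (Nat.eqb_spec j m), (Nat.eqb_spec m j); subst; try lia; Csolve. }
  assert (HPvPv : re (inner n Pv Pv) = rsum k (fun j => Cnorm2 (inner n (e j) v))).
  { rewrite re_inner_self. apply (span_norm n k e Pv (fun j => inner n (e j) v) He (fun i _ => eq_refl)). }
  assert (HvPv : re (inner n v Pv) = rsum k (fun j => Cnorm2 (inner n (e j) v))).
  { unfold Pv at 1. rewrite inner_lin_r, re_csum. apply rsum_ext. intros j Hj.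
    rewrite (inner_conj n (e j) v). unfold Cnorm2; simpl; ring. }
  assert (HPvv : re (inner n Pv v) = rsum k (fun j => Cnorm2 (inner n (e j) v))).
  { rewrite inner_conj. simpl. rewrite HvPv. auto. }
  rewrite <- re_inner_self in H. unfold w in H.
  rewrite inner_add_l, !inner_add_r, !inner_scal_l, !inner_scal_r in H. simpl in H.
  rewrite re_inner_self in H. lra.
Qed.



Lemma Cnorm2_zero z : Cnorm2 z = 0 -> z = C0.
Proof.
  destruct z as [a b]; unfold Cnorm2; simpl; intros.
  assert (a * a = 0) by nra. assert (b * b = 0) by nra.
  apply Rmult_integral in H0. apply Rmult_integral in H1.
  assert (a = 0) by tauto. assert (b = 0) by tauto. subst. reflexivity.
Qed.

Lemma Qbound n k e W c p v c0 :
  orthonormal n k e -> spectral_decomp n W c p -> 0 < c0 ->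
  (forall u, c0 * rsum k (fun i => Cnorm2 (inner n (e i) u)) <= re (inner n u (mat_vec n W u))) ->
  in_span n k e v -> nrm2 n v = 1 ->
  rsum n (fun j => if Rlt_dec 0 (p j) then Cnorm2 (inner n (c j) v) / p j else 0) <= / c0.
Proof.
  intros He HW Hc0 Hpos [g Hg] Hv1.
  set (Q := rsum n (fun j => if Rlt_dec 0 (p j) then Cnorm2 (inner n (c j) v) / p j else 0)).
  set (be := fun j => if Rlt_dec 0 (p j) then Cmul (RtoC (/ p j)) (inner n (c j) v) else C0).
  set (u := fun i => csum n (fun j => Cmul (be j) (c j i))).
  assert (Hcu : forall j, (j < n)%nat -> inner n (c j) u = be j).
  { intros j Hj. unfold u. rewrite inner_lin_r.
    rewrite (csum_ext n _ (fun m => if Nat.eqb m j then be m else C0)).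
    - apply csum_single; auto.
    - intros m Hm. rewrite (SD_orth n W c p HW) by auto.
      destruct (Nat.eqb_spec j m), (Nat.eqb_spec m j); subst; try lia; Csolve. }
  assert (H1 : re (inner n u (mat_vec n W u)) = Q).
  { rewrite (SD_quad n W c p HW). unfold Q. apply rsum_ext. intros j Hj. rewrite Hcu by auto.
    unfold be. destruct (Rlt_dec 0 (p j)).
    - rewrite Cnorm2_mul. unfold Cnorm2 at 1; simpl. field; intro; lra.
    - unfold Cnorm2; simpl; ring. }
  assert (H2 : re (inner n u v) = Q).
  { unfold u. rewrite inner_lin_l, re_csum. unfold Q. apply rsum_ext. intros j Hj.
    unfold be. destruct (Rlt_dec 0 (p j)).
    - unfold Cnorm2; simpl. field; intro; lra.
    - simpl; ring. }
  assert (H3 : inner n u v = csum k (fun i => Cmul (g i) (Cconj (inner n (e i) u)))).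
  { rewrite (inner_ext n u u v _ (fun i _ => eq_refl) Hg), inner_lin_r. apply csum_ext. intros.
    rewrite (inner_conj n (e i) u). auto. }
  assert (H4 : rsum k (fun i => Cnorm2 (g i)) = 1) by (rewrite <- (span_norm n k e v g He Hg); auto).
  specialize (Hpos u). rewrite H1 in Hpos.
  assert (H5 : 0 <= rsum k (fun i => Cnorm2 (Cadd (g i) (Cmul (RtoC (- c0)) (inner n (e i) u))))).
  { apply rsum_nonneg. intros. apply Cnorm2_nonneg. }
  rewrite (rsum_ext k _ (fun i => Cnorm2 (g i) + (-2 * c0) * re (Cmul (g i) (Cconj (inner n (e i) u)))
     + (c0 * c0) * Cnorm2 (inner n (e i) u))) in H5 by (intros; unfold Cnorm2; simpl; ring).
  rewrite !rsum_plus, !rsum_scal in H5.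
  rewrite <- re_csum, <- H3, H2, H4 in H5.
  assert (c0 * Q <= 1) by nra.
  apply (Rmult_le_reg_l c0); auto. rewrite Rinv_r; lra.
Qed.

Lemma supp_from_span n k e W c p v c0 :
  orthonormal n k e -> spectral_decomp n W c p -> 0 < c0 ->
  (forall u, c0 * rsum k (fun i => Cnorm2 (inner n (e i) u)) <= re (inner n u (mat_vec n W u))) ->
  in_span n k e v -> in_support n W v.
Proof.
  intros He HW Hc0 Hpos Hv.
  assert (Hz : forall j, (j < n)%nat -> ~ 0 < p j -> inner n (c j) v = C0).
  { intros j Hj Hp. apply (span_inner n k e v (c j) He Hv). intros i Hi.
    assert (Hle : c0 * rsum k (fun i => Cnorm2 (inner n (e i) (c j))) <= 0).
    { pose proof (Hpos (c j)). rewrite (SD_qj n W c p HW j Hj) in H. lra. }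
    assert (rsum k (fun i => Cnorm2 (inner n (e i) (c j))) <= 0).
    { destruct (Rle_or_lt (rsum k (fun i => Cnorm2 (inner n (e i) (c j)))) 0); auto. nra. }
    pose proof (rsum_zero_each k _ (fun i _ => Cnorm2_nonneg (inner n (e i) (c j))) H i Hi) as Z.
    apply Cnorm2_zero in Z. rewrite inner_conj, Z. Csolve. }
  exists n, (fun j => if Rlt_dec 0 (p j) then c j else (fun _ => C0)),
    (fun j => if Rlt_dec 0 (p j) then RtoC (p j) else C1), (fun j => inner n (c j) v).
  split.
  - intros j Hj. destruct (Rlt_dec 0 (p j)).
    + split. apply RtoC_neq0; lra. apply (SD_eig n W c p HW j Hj).
    + split. intro E. apply (f_equal re) in E. simpl in E. lra.
      intros i Hi. unfold mat_vec. rewrite (csum_ext n _ (fun _ => C0)). rewrite csum_0. Csolve.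
      intros; Csolve.
  - intros i Hi. rewrite (recon n c v) by (destruct HW; auto). apply csum_ext. intros j Hj.
    destruct (Rlt_dec 0 (p j)). auto. rewrite Hz by auto. Csolve.
Qed.



Definition Idn (d : nat) : mat := fun a b => if Nat.eqb a b then RtoC (/ INR d) else C0.

Lemma rsum_const n c : rsum n (fun _ => c) = INR n * c.
Proof. induction n; simpl rsum; [simpl; ring|rewrite IHn, S_INR; ring]. Qed.

Lemma csum_C1 k : csum k (fun _ => C1) = RtoC (INR k).
Proof. apply C_ext; rewrite ?re_csum, ?im_csum; simpl. rewrite rsum_const; ring. apply rsum_0. Qed.

Lemma Idn_vec d v : vec_eq d (mat_vec d (Idn d) v) (fun i => Cmul (RtoC (/ INR d)) (v i)).
Proof.
  intros i Hi. unfold mat_vec, Idn.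
  rewrite (csum_ext d _ (fun j => if Nat.eqb j i then Cmul (RtoC (/ INR d)) (v j) else C0)).
  apply csum_single; auto.
  intros j Hj. rewrite Nat.eqb_sym. destruct (Nat.eqb j i); Csolve.
Qed.

Lemma Idn_quad d v : re (inner d v (mat_vec d (Idn d) v)) = / INR d * nrm2 d v.
Proof.
  rewrite (inner_ext d v v _ _ (fun i _ => eq_refl) (Idn_vec d v)), inner_scal_r. simpl.
  rewrite re_inner_self. ring.
Qed.

Lemma trace_madd n A B : trace n (mat_add A B) = Cadd (trace n A) (trace n B).
Proof. unfold trace, mat_add. apply csum_plus. Qed.
Lemma trace_mscale n c A : trace n (mat_scale c A) = Cmul c (trace n A).
Proof. unfold trace, mat_scale. apply csum_scal. Qed.

Lemma Idn_trace d : (0 < d)%nat -> trace d (Idn d) = C1.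
Proof.
  intros. unfold trace, Idn. rewrite (csum_ext d _ (fun _ => RtoC (/ INR d))).
  - apply C_ext; rewrite ?re_csum, ?im_csum; simpl. rewrite rsum_const. field. apply not_0_INR; lia. apply rsum_0.
  - intros. rewrite Nat.eqb_refl. auto.
Qed.

Lemma Idn_density d : (0 < d)%nat -> density d (Idn d).
Proof.
  intros Hd. split; [|split].
  - intros i j _ _. unfold Idn. rewrite Nat.eqb_sym. destruct (Nat.eqb j i); Csolve.
  - intros v. rewrite Idn_quad. apply Rmult_le_pos. left; apply Rinv_0_lt_compat, lt_0_INR; auto. apply nrm2_nonneg.
  - apply Idn_trace; auto.
Qed.

Lemma prod_Idn ds : (0 < dimprod ds)%nat -> forall a b, (a < dimprod ds)%nat -> (b < dimprod ds)%nat ->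
  prod_mat ds (fun i => Idn (nth i ds 0%nat)) a b = Idn (dimprod ds) a b.
Proof.
  induction ds as [|d ds IH]; intros Hpos a b Ha Hb.
  - simpl in Ha, Hb. assert (a = 0%nat) by lia. assert (b = 0%nat) by lia. subst.
    unfold Idn; simpl. apply C_ext; simpl; auto. rewrite Rinv_1; auto.
  - cbn [prod_mat]. cbn [dimprod] in *. set (N := dimprod ds) in *.
    assert (HN : (0 < N)%nat) by (destruct N; lia).
    assert (Hd : (0 < d)%nat) by (destruct d; lia).
    change (fun i => Idn (nth (S i) (d :: ds) 0%nat)) with (fun i => Idn (nth i ds 0%nat)).
    rewrite IH by (auto; apply Nat.mod_upper_bound; lia).
    simpl nth. unfold Idn.
    pose proof (Nat.div_mod_eq a N). pose proof (Nat.div_mod_eq b N).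
    destruct (Nat.eqb_spec (a / N) (b / N)), (Nat.eqb_spec (a mod N) (b mod N)), (Nat.eqb_spec a b);
      try (exfalso; subst; lia); try (rewrite e, e0 in H; lia); try Csolve.
    apply C_ext; simpl; try ring. rewrite mult_INR. field. split; apply not_0_INR; lia.
Qed.

Lemma density_ext n A B : mat_eq n A B -> density n B -> density n A.
Proof.
  intros H [Hh [Hp Ht]]. split; [|split].
  - intros i j Hi Hj. rewrite !H by auto. apply Hh; auto.
  - intros v. rewrite (inner_ext n v v _ (mat_vec n B v) (fun i _ => eq_refl) (mat_vec_ext n A B v v H (fun i _ => eq_refl))). apply Hp.
  - rewrite <- Ht. unfold trace. apply csum_ext. intros. apply H; auto.
Qed.

Lemma separable_ext ds A B : mat_eq (dimprod ds) A B -> separable ds B -> separable ds A.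
Proof.
  intros H [Hd [N [p [rhos [H1 [H2 [H3 H4]]]]]]]. split. apply (density_ext _ A B H Hd).
  exists N, p, rhos. split; auto. split; auto. split; auto. intros i j Hi Hj. rewrite H by auto. apply H4; auto.
Qed.

Lemma Idn_sep ds : (0 < dimprod ds)%nat -> separable ds (Idn (dimprod ds)).
Proof.
  intros Hpos. split. apply Idn_density; auto.
  exists 1%nat, (fun _ => 1), (fun _ i => Idn (nth i ds 0%nat)). split; [|split; [|split]].
  - intros; lra.
  - simpl; ring.
  - intros j i _ Hi. apply Idn_density. apply dimprod_pos; auto.
  - intros a b Ha Hb. simpl. rewrite prod_Idn by auto. Csolve.
Qed.



Definition rho_of k e := mat_scale (RtoC (/ INR k)) (projector k e).

Lemma re_RtoC_mul c z : re (Cmul (RtoC c) z) = c * re z.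
Proof. simpl; ring. Qed.

Lemma rho_quad n k e u : re (inner n u (mat_vec n (rho_of k e) u)) = / INR k * rsum k (fun j => Cnorm2 (inner n (e j) u)).
Proof. unfold rho_of. rewrite inner_mscale, re_RtoC_mul, proj_quad. auto. Qed.

Lemma rsum_opp n f : rsum n (fun i => - f i) = - rsum n f.
Proof. rewrite (rsum_ext n _ (fun i => -1 * f i)) by (intros; ring). rewrite rsum_scal. ring. Qed.

Lemma rho_herm k e i l : rho_of k e i l = Cconj (rho_of k e l i).
Proof.
  unfold rho_of, mat_scale, projector.
  assert (R1: rsum k (fun j => re (outer (e j) (e j) i l)) = rsum k (fun j => re (outer (e j) (e j) l i)))
    by (apply rsum_ext; intros; unfold outer; simpl; ring).
  assert (R2: rsum k (fun j => im (outer (e j) (e j) i l)) = - rsum k (fun j => im (outer (e j) (e j) l i))).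
  { rewrite <- rsum_opp. apply rsum_ext; intros; unfold outer; simpl; ring. }
  apply C_ext; simpl; rewrite !re_csum, !im_csum, ?R1, ?R2; ring.
Qed.

Lemma rho_trace n k e : (0 < k)%nat -> orthonormal n k e -> trace n (rho_of k e) = C1.
Proof.
  intros Hk He. unfold rho_of. rewrite trace_mscale. unfold trace, projector.
  rewrite csum_swap. rewrite (csum_ext k _ (fun _ => C1)).
  - rewrite csum_C1. apply C_ext; simpl; try ring. field. apply not_0_INR; lia.
  - intros j Hj. transitivity (inner n (e j) (e j)).
    + unfold inner. apply csum_ext; intros. unfold outer. Csolve.
    + rewrite He, Nat.eqb_refl; auto.
Qed.

Lemma Rg_witness ds k e : (0 < dimprod ds)%nat -> (0 < k)%nat -> orthonormal (dimprod ds) k e ->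
  exists t, 0 <= t /\ exists tau, density (dimprod ds) tau /\
    separable ds (mat_scale (RtoC (/ (1 + t))) (mat_add (rho_of k e) (mat_scale (RtoC t) tau))).
Proof.
  intros Hn Hk He. set (n := dimprod ds) in *. set (t0 := INR n).
  assert (Ht0 : 1 <= t0) by (unfold t0; apply (le_INR 1); lia).
  assert (Hk1 : 1 <= INR k) by (apply (le_INR 1); lia).
  set (tau := mat_add (mat_scale (RtoC ((1 + t0) / t0)) (Idn n)) (mat_scale (RtoC (- / t0)) (rho_of k e))).
  exists t0. split. lra. exists tau. split.
  - split; [|split].
    + intros i l Hi Hl. unfold tau, mat_add, mat_scale. rewrite (rho_herm k e i l).
      unfold Idn. rewrite Nat.eqb_sym. destruct (Nat.eqb l i); Csolve.
    + intros v. unfold tau. rewrite inner_madd, !inner_mscale.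
      pose proof (Idn_quad n v) as Q1. pose proof (rho_quad n k e v) as Q2.
      pose proof (bessel n k e v He) as B. pose proof (nrm2_nonneg n v) as N0.
      assert (E : re (Cadd (Cmul (RtoC ((1 + t0) / t0)) (inner n v (mat_vec n (Idn n) v)))
                 (Cmul (RtoC (- / t0)) (inner n v (mat_vec n (rho_of k e) v)))) =
               (1 + t0) / t0 * re (inner n v (mat_vec n (Idn n) v)) + (- / t0) * re (inner n v (mat_vec n (rho_of k e) v)))
        by (simpl; ring).
      rewrite E, Q1, Q2. fold t0.
      set (s := rsum k (fun j => Cnorm2 (inner n (e j) v))) in *. set (N2 := nrm2 n v) in *.
      assert (0 < / t0) by (apply Rinv_0_lt_compat; lra).
      assert (/ INR k <= 1) by (rewrite <- Rinv_1; apply Rinv_le_contravar; lra).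
      assert (0 < / INR k) by (apply Rinv_0_lt_compat; lra).
      assert (0 <= s) by (apply rsum_nonneg; intros; apply Cnorm2_nonneg).
      assert (/ INR k * s <= N2).
      { apply Rle_trans with s; [|lra]. rewrite <- (Rmult_1_l s) at 2. apply Rmult_le_compat_r; lra. }
      unfold Rdiv.
      replace ((1 + t0) * / t0 * (/ t0 * N2) + - / t0 * (/ INR k * s)) with
        (/ t0 * ((1 + t0) * / t0 * N2 - / INR k * s)) by ring.
      apply Rmult_le_pos; [lra|].
      assert ((1 + t0) * / t0 >= 1). { replace ((1 + t0) * / t0) with (1 + / t0) by (field; lra). lra. }
      nra.
    + unfold tau. rewrite trace_madd, !trace_mscale, Idn_trace, rho_trace by auto.
      apply C_ext; simpl; try ring. field. lra.
  - apply (separable_ext ds _ (Idn n)). 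
    + intros i l Hi Hl. unfold tau, mat_scale, mat_add. apply C_ext; simpl; field; lra.
    + apply Idn_sep; auto.
Qed.



Lemma trace_sep_sum n N S W (pi : nat -> R) (P : nat -> mat) :
  mat_eq n W (fun a b => csum N (fun j => Cmul (RtoC (pi j)) (P j a b))) ->
  trace n (mat_mul n S W) = csum N (fun j => Cmul (RtoC (pi j)) (trace n (mat_mul n S (P j)))).
Proof.
  intros H. rewrite (trace_ext n S W S _ (fun i j _ _ => eq_refl) H). unfold trace, mat_mul.
  transitivity (csum n (fun i => csum N (fun j => csum n (fun k => Cmul (RtoC (pi j)) (Cmul (S i k) (P j k i)))))).
  - apply csum_ext; intros i Hi.
    rewrite (csum_ext n _ (fun k => csum N (fun j => Cmul (RtoC (pi j)) (Cmul (S i k) (P j k i))))).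
    + apply csum_swap.
    + intros k Hk. rewrite <- csum_scal. apply csum_ext; intros; Csolve.
  - rewrite csum_swap. apply csum_ext; intros j Hj. rewrite <- csum_scal. apply csum_ext; intros i Hi.
    rewrite csum_scal. auto.
Qed.

Lemma sep_trace_bound ds S W Lam : separable ds W ->
  (forall phis, (forall i, (i < length ds)%nat -> unit_vec (nth i ds 0%nat) (phis i)) ->
      re (inner (dimprod ds) (prod_vec ds phis) (mat_vec (dimprod ds) S (prod_vec ds phis))) <= Lam) ->
  re (trace (dimprod ds) (mat_mul (dimprod ds) S W)) <= Lam.
Proof.
  intros [Hd [N [p [rhos [H1 [H2 [H3 H4]]]]]]] HL.
  rewrite (trace_sep_sum _ N S W p (fun j => prod_mat ds (rhos j)) H4), re_csum.
  apply Rle_trans with (rsum N (fun j => p j * Lam)).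
  - apply rsum_le. intros j Hj. rewrite re_RtoC_mul. apply Rmult_le_compat_l; auto.
    apply prod_trace_bound; auto.
  - rewrite (rsum_ext N _ (fun j => Lam * p j)) by (intros; ring). rewrite rsum_scal, H2. lra.
Qed.

Lemma Rpower_le_log x X : 0 < X -> x <= log2 X -> Rpower 2 x <= X.
Proof.
  intros HX Hx. unfold Rpower, log2 in *. pose proof ln2_pos.
  assert (x * ln 2 <= ln X).
  { apply (Rmult_le_compat_r (ln 2)) in Hx; [|lra]. unfold Rdiv in Hx. rewrite Rmult_assoc, Rinv_l in Hx; lra. }
  rewrite <- (exp_ln X) by auto. destruct (Req_dec (x * ln 2) (ln X)). rewrite H1; lra.
  left. apply exp_increasing. lra.
Qed.

Definition ERset ds sigma := fun x => exists w, separable ds w /\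
        (forall v, in_support (dimprod ds) sigma v -> in_support (dimprod ds) w v) /\
        exists Ls Lw, is_log2_mat (dimprod ds) sigma Ls /\ is_log2_mat (dimprod ds) w Lw /\
          x = re (trace (dimprod ds) (mat_mul (dimprod ds) sigma (mat_sub Ls Lw))).

Lemma E_R_eq ds sigma : E_R ds sigma = Inf (ERset ds sigma).
Proof. reflexivity. Qed.

Lemma ER_elem ds S b q x : density (dimprod ds) S -> spectral_decomp (dimprod ds) S b q -> ERset ds S x ->
  exists W c p, separable ds W /\ spectral_decomp (dimprod ds) W c p /\
    (forall v, in_support (dimprod ds) S v -> in_support (dimprod ds) W v) /\
    x + vN_entropy (dimprod ds) S = - rsum (dimprod ds) (fun j => lg (p j) * aj (dimprod ds) b q c j).
Proof.
  intros Hd HS [w [Hsep [Hsup [Ls [Lw [HLs [HLw ->]]]]]]].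
  destruct HLw as [c [p [HW HLw']]]. exists w, c, p. split; auto. split; auto. split; auto.
  rewrite trace_sub, (trace_self_log _ S b q Ls Hd HS HLs), (trace_fun _ S w c p lg Lw HW HLw').
  rewrite (vN_value _ S b q Hd HS).
  rewrite (rsum_ext _ (fun j => lg (p j) * re (inner (dimprod ds) (c j) (mat_vec (dimprod ds) S (c j))))
     (fun j => lg (p j) * aj (dimprod ds) b q c j)) by (intros; rewrite (aj_eq _ S b q c i HS); auto).
  ring.
Qed.

Lemma ER_mk ds S b q W c p : density (dimprod ds) S -> spectral_decomp (dimprod ds) S b q ->
  separable ds W -> spectral_decomp (dimprod ds) W c p ->
  (forall v, in_support (dimprod ds) S v -> in_support (dimprod ds) W v) ->
  ERset ds S (- vN_entropy (dimprod ds) S - rsum (dimprod ds) (fun j => lg (p j) * aj (dimprod ds) b q c j)).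
Proof.
  intros Hd HS Hsep HW Hsup. exists W. split; auto. split; auto.
  eexists; eexists; split; [apply (log_mat_exists _ S b q HS)|]. split; [apply (log_mat_exists _ W c p HW)|].
  rewrite trace_sub, (trace_self_log _ S b q _ Hd HS (log_mat_exists _ S b q HS)).
  rewrite (trace_fun _ S W c p lg _ HW (fun i l _ _ => eq_refl)).
  rewrite (vN_value _ S b q Hd HS).
  rewrite (rsum_ext _ (fun j => lg (p j) * re (inner (dimprod ds) (c j) (mat_vec (dimprod ds) S (c j))))
     (fun j => lg (p j) * aj (dimprod ds) b q c j)) by (intros; rewrite (aj_eq _ S b q c i HS); auto).
  ring.
Qed.



Lemma lg_nonpos x : x <= 1 -> lg x <= 0.
Proof.
  intros. unfold lg, log2. destruct (Rlt_dec 0 x); [|lra].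
  pose proof ln2_pos. assert (ln x <= 0) by (rewrite <- ln_1; apply ln_le; lra).
  unfold Rdiv. assert (0 < / ln 2) by (apply Rinv_0_lt_compat; lra). nra.
Qed.

Theorem mainTheorem10 (ds : list nat) (k : nat) (e : nat -> vec) (sigma2 : mat) :
  (0 < length ds)%nat ->
  (0 < k)%nat ->
  orthonormal (dimprod ds) k e ->
  density (dimprod ds) sigma2 ->
  (forall v, in_support (dimprod ds) sigma2 v <-> in_span (dimprod ds) k e v) ->
  let rho := mat_scale (RtoC (/ INR k)) (projector k e) in
  let r := INR k * (1 + Rg ds rho) in
  r >= Rpower 2 (E_R ds sigma2 + vN_entropy (dimprod ds) sigma2) /\
  Rpower 2 (E_R ds sigma2 + vN_entropy (dimprod ds) sigma2) >= Rpower 2 (G_measure ds sigma2).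
Proof.
  intros Hlen Hk He Hd Hsupp rho r.
  assert (Hn : (0 < dimprod ds)%nat).
  { destruct (dimprod ds) eqn:En; [|lia]. exfalso. pose proof (He 0%nat 0%nat Hk Hk) as H.
    simpl in H. injection H. lra. }
  set (n := dimprod ds) in *.
  pose proof Hd as Hd'. destruct Hd' as [Hh [Hp Ht]].
  destruct (spectral_exists n sigma2 Hh) as [b [q HS]].
  assert (Hq : forall l, (l < n)%nat -> 0 <= q l) by (intros; apply (SD_nonneg n sigma2 b q HS); auto).
  set (S := vN_entropy n sigma2).
  assert (Fa : forall W c p, separable ds W -> spectral_decomp n W c p ->
     (forall v, in_support n sigma2 v -> in_support n W v) ->
     (forall j, (j < n)%nat -> 0 <= aj n b q c j) /\ rsum n (fun j => aj n b q c j) = 1 /\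
     (forall j, (j < n)%nat -> 0 <= p j) /\ (forall j, (j < n)%nat -> p j <= 1) /\
     (forall j, (j < n)%nat -> p j = 0 -> aj n b q c j = 0)).
  { intros W c p Hsep HW Hsup. destruct Hsep as [HdW _]. pose proof HdW as [_ [HpW _]].
    split; [intros; apply aj_nonneg; auto|]. split; [apply (aj_sum n sigma2 b q c p W); auto|].
    split; [intros; apply (SD_nonneg n W c p HW); auto|]. split; [intros; apply (SD_le1 n W c p HW); auto|].
    intros; apply (aj_zero n sigma2 b q W c p); auto. }
  set (RgS := fun t => 0 <= t /\ exists tau, density n tau /\
        separable ds (mat_scale (RtoC (/ (1 + t))) (mat_add rho (mat_scale (RtoC t) tau)))).
  assert (RgE : Rg ds rho = Inf RgS) by reflexivity.
  assert (RgNE : exists t, RgS t) by (apply (Rg_witness ds k e); auto).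
  assert (RgG : is_glb RgS (Inf RgS)).
  { apply glb_exists; auto. exists 0. intros t [Ht0 _]; auto. }
  assert (Key : forall t, RgS t -> exists W c p, separable ds W /\ spectral_decomp n W c p /\
     (forall v, in_support n sigma2 v -> in_support n W v) /\
     rsum n (fun j => if Rlt_dec 0 (p j) then aj n b q c j / p j else 0) <= (1 + t) * INR k).
  { intros t [Ht0 [tau [Htau Hsep]]].
    set (W := mat_scale (RtoC (/ (1 + t))) (mat_add rho (mat_scale (RtoC t) tau))) in *.
    pose proof Hsep as [[HhW _] _].
    destruct (spectral_exists n W HhW) as [c [p HW]].
    assert (Hk1 : 1 <= INR k) by (apply (le_INR 1); lia).
    set (c0 := / ((1 + t) * INR k)).
    assert (Hc0 : 0 < c0) by (apply Rinv_0_lt_compat; nra).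
    assert (Hpos : forall u, c0 * rsum k (fun i => Cnorm2 (inner n (e i) u)) <= re (inner n u (mat_vec n W u))).
    { intros u. unfold W. rewrite inner_mscale, re_RtoC_mul, inner_madd, inner_mscale. simpl re.
      pose proof (rho_quad n k e u) as Q. unfold rho_of in Q. fold rho in Q.
      destruct Htau as [_ [Hptau _]]. pose proof (Hptau u) as T.
      replace (re (inner n u (mat_vec n rho u)) + (t * re (inner n u (mat_vec n tau u)) - 0 * im (inner n u (mat_vec n tau u))))
        with (re (inner n u (mat_vec n rho u)) + t * re (inner n u (mat_vec n tau u))) by ring.
      rewrite Q. unfold c0. rewrite Rinv_mult.
      assert (0 < / (1 + t)) by (apply Rinv_0_lt_compat; lra).
      assert (0 <= t * re (inner n u (mat_vec n tau u))) by (apply Rmult_le_pos; auto).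
      set (s := rsum k (fun j => Cnorm2 (inner n (e j) u))). nra. }
    assert (Hsup : forall v, in_support n sigma2 v -> in_support n W v).
    { intros v Hv. apply (supp_from_span n k e W c p v c0); auto. apply Hsupp; auto. }
    exists W, c, p. split; auto. split; auto. split; auto.
    replace ((1 + t) * INR k) with (/ c0) by (unfold c0; rewrite Rinv_inv; auto).
    unfold aj.
    rewrite (rsum_ext n _ (fun j => rsum n (fun l => q l * (if Rlt_dec 0 (p j) then Cnorm2 (inner n (c j) (b l)) / p j else 0)))).
    2:{ intros j Hj. destruct (Rlt_dec 0 (p j)).
        - unfold Rdiv. rewrite Rmult_comm, <- rsum_scal. apply rsum_ext. intros l Hl.
          rewrite (inner_conj n (c j) (b l)), Cnorm2_conj. ring.
        - rewrite (rsum_ext n _ (fun _ => 0)) by (intros; ring). rewrite rsum_0; auto. }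
    rewrite rsum_swap.
    apply Rle_trans with (rsum n (fun l => q l * / c0)).
    - apply rsum_le. intros l Hl. rewrite rsum_scal.
      destruct (Req_dec (q l) 0) as [Z|NZ]. rewrite Z; lra.
      apply Rmult_le_compat_l; auto.
      + apply (Qbound n k e W c p (b l) c0); auto.
        apply Hsupp. apply (in_supp_eig n sigma2 b q); auto.
        apply (SD_unit n sigma2 b q HS); auto.
    - rewrite (rsum_ext n _ (fun l => / c0 * q l)) by (intros; ring). rewrite rsum_scal.
      rewrite (SD_sum1 n sigma2 b q HS Hd). lra. }
  assert (ERlow : forall x, ERset ds sigma2 x -> - S <= x).
  { intros x Hx. destruct (ER_elem ds sigma2 b q x Hd HS Hx) as [W [c [p [Hsep [HW [Hsup Hx']]]]]].
    change (dimprod ds) with n in HW, Hsup, Hx'. fold S in Hx'.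
    destruct (Fa W c p Hsep HW Hsup) as [Ha [Hs [Hp0 [Hp1 Hz]]]].
    assert (rsum n (fun j => lg (p j) * aj n b q c j) <= 0).
    { rewrite <- (rsum_0 n). apply rsum_le. intros j Hj. pose proof (lg_nonpos (p j) (Hp1 j Hj)).
      pose proof (Ha j Hj). nra. }
    lra. }
  assert (ERne : exists x, ERset ds sigma2 x).
  { destruct RgNE as [t Ht1]. destruct (Key t Ht1) as [W [c [p [Hsep [HW [Hsup _]]]]]].
    eexists; apply (ER_mk ds sigma2 b q W c p); auto. }
  assert (ERG : is_glb (ERset ds sigma2) (E_R ds sigma2)).
  { rewrite E_R_eq. apply glb_exists; auto. exists (- S); auto. }
  split.
  - assert (P1 : forall t, RgS t -> Rpower 2 (E_R ds sigma2 + S) <= (1 + t) * INR k).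
    { intros t Ht1. destruct (Key t Ht1) as [W [c [p [Hsep [HW [Hsup Hb]]]]]].
      destruct (Fa W c p Hsep HW Hsup) as [Ha [Hs [Hp0 [Hp1 Hz]]]].
      assert (Ex : ERset ds sigma2 (- S - rsum n (fun j => lg (p j) * aj n b q c j)))
        by (apply (ER_mk ds sigma2 b q W c p); auto).
      assert (Hle := proj1 ERG _ Ex).
      assert (Hk1 : 1 <= INR k) by (apply (le_INR 1); lia).
      destruct Ht1 as [Ht0 _].
      assert (HX : 0 < (1 + t) * INR k) by nra.
      assert (Hc0 : 0 < / ((1 + t) * INR k)) by (apply Rinv_0_lt_compat; auto).
      assert (U := upper_bound n (aj n b q c) p (/ ((1 + t) * INR k)) Ha Hs Hp0 Hz Hc0).
      rewrite Rinv_inv in U. specialize (U Hb).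
      apply Rpower_le_log; auto.
      unfold log2 in U |- *. rewrite ln_Rinv in U by auto. unfold Rdiv in U |- *. lra. }
    assert (Hk1 : 1 <= INR k) by (apply (le_INR 1); lia).
    assert (Hr1 : Rpower 2 (E_R ds sigma2 + S) / INR k - 1 <= Rg ds rho).
    { rewrite RgE. apply (proj2 RgG). intros t Ht1. specialize (P1 t Ht1).
      apply (Rmult_le_compat_r (/ INR k)) in P1; [|left; apply Rinv_0_lt_compat; lra].
      replace ((1 + t) * INR k * / INR k) with (1 + t) in P1 by (field; lra). unfold Rdiv. lra. }
    unfold r. fold S. apply Rle_ge.
    apply (Rmult_le_compat_l (INR k)) in Hr1; [|lra].
    replace (INR k * (Rpower 2 (E_R ds sigma2 + S) / INR k - 1)) with (Rpower 2 (E_R ds sigma2 + S) - INR k) in Hr1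
      by (field; lra).
    lra.
  - set (GS := fun x : R => exists phis : nat -> vec,
        (forall i, (i < length ds)%nat -> unit_vec (nth i ds 0%nat) (phis i)) /\ x = re (inner n (prod_vec ds phis) (mat_vec n sigma2 (prod_vec ds phis)))).
    assert (GE : G_measure ds sigma2 = - log2 (Sup GS)) by reflexivity.
    assert (GL : is_lub GS (Sup GS)).
    { apply lub_exists.
      - exists (re (inner n (prod_vec ds (fun _ => e0)) (mat_vec n sigma2 (prod_vec ds (fun _ => e0))))).
        exists (fun _ => e0). split; auto. intros i Hi. apply e0_unit. apply dimprod_pos; auto.
      - exists 1. intros x [phis [Hu ->]]. rewrite (SD_quad n sigma2 b q HS).
        apply Rle_trans with (rsum n (fun j => Cnorm2 (inner n (b j) (prod_vec ds phis)))).
        + apply rsum_le. intros j Hj. pose proof (SD_le1 n sigma2 b q HS j Hd Hj).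
          pose proof (Cnorm2_nonneg (inner n (b j) (prod_vec ds phis))). nra.
        + rewrite <- (parseval n b) by (destruct HS; auto). unfold n. rewrite pv_norm; auto. lra. }
    assert (Glow : forall x, ERset ds sigma2 x -> G_measure ds sigma2 - S <= x).
    { intros x Hx. destruct (ER_elem ds sigma2 b q x Hd HS Hx) as [W [c [p [Hsep [HW [Hsup Hx']]]]]].
      change (dimprod ds) with n in HW, Hsup, Hx'. fold S in Hx'.
      destruct (Fa W c p Hsep HW Hsup) as [Ha [Hs [Hp0 [Hp1 Hz]]]].
      destruct (jensen n (aj n b q c) p Ha Hs Hp0 Hz) as [Hm HJ].
      assert (Hm2 : rsum n (fun j => aj n b q c j * p j) <= Sup GS).
      { assert (E : re (trace n (mat_mul n sigma2 W)) = rsum n (fun j => aj n b q c j * p j)).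
        { rewrite (trace_fun n sigma2 W c p (fun x => x) W HW (proj2 HW)). apply rsum_ext. intros j Hj.
          rewrite (aj_eq n sigma2 b q c j HS). ring. }
        rewrite <- E. apply sep_trace_bound; auto. intros phis Hu. apply (proj1 GL). exists phis; auto. }
      assert (log2 (rsum n (fun j => aj n b q c j * p j)) <= log2 (Sup GS)).
      { unfold log2, Rdiv. apply Rmult_le_compat_r. left; apply Rinv_0_lt_compat, ln2_pos. apply ln_le; auto. }
      rewrite GE. lra. }
    assert (G_measure ds sigma2 - S <= E_R ds sigma2) by (apply (proj2 ERG); auto).
    fold S. apply Rle_ge. apply Rle_Rpower; lra.
Qed.
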